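(* Let $n,m,l$ be positive integers, $f:\mathbb{R}^n\times\mathbb{R}^m\to\mathbb{R}^n$, $g:\mathbb{R}^n\times\mathbb{R}^m\to\mathbb{R}^{n\times l}$ smooth with $f(0,0)=0$, $g(0,0)=0$, and consider $\dot x=f(x,u)+g(x,u)\theta$ with constant unknown $\theta\in\mathbb{R}^l$. Let $k:\mathbb{R}^l\times\mathbb{R}^n\to\mathbb{R}^m$ be smooth with $k(\vartheta,0)=0$, and $V_\vartheta,Q_\vartheta:\mathbb{R}^n\to\mathbb{R}_+$ continuous, positive definite, radially unbounded, with $(\vartheta,x)\mapsto V_\vartheta(x),Q_\vartheta(x)$ continuous, such that: (H1) for each $\vartheta$, the origin is globally asymptotically stable for $\dot x=f(x,k(\vartheta,x))+g(x,k(\vartheta,x))\vartheta$ and every solution satisfies $V_\vartheta(x(t))\le Q_\vartheta(x(0))$ for $t\ge0$; (H2) for every nonempty compact $\Theta\subset\mathbb{R}^l$ and $M\ge0$ there is $R>0$ with $V_\vartheta(x)\le M,\ \vartheta\in\Theta\Rightarrow|x|\le R$; (H3) there is a positive integer $N$ such that: if there exist $0=\tau_0<\dots<\tau_N$, $\theta,d_0,\dots,d_N\in\mathbb{R}^l$ with all $d_i\ne0$, and a right differentiable $x\in C^0([0,\tau_N];\mathbb{R}^n)\cap C^1([0,\tau_N]\setminus\{\tau_0,\dots,\tau_N\};\mathbb{R}^n)$ with $\dot x(t)=f(x(t),k(\theta+d_i,x(t)))+g(x(t),k(\theta+d_i,x(t)))\theta$ on $[\tau_i,\tau_{i+1})$,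 $i=0,\dots,N-1$, and $g(x(t),k(\theta+d_j,x(t)))d_{i+1}=0$ for $t\in[\tau_j,\tau_{j+1}]$, $i=0,\dots,N-1$, $j=0,\dots,i$, then $x\equiv0$ on $[0,\tau_N]$. Suppose moreover that for each $\vartheta\in\mathbb{R}^l$ the origin is globally exponentially stable for $\dot x=f(x,k(\vartheta,x))+g(x,k(\vartheta,x))\vartheta$, i.e. there are $M_\vartheta,\omega_\vartheta>0$ with $|x(t)|\le M_\vartheta e^{-\omega_\vartheta t}|x(0)|$ for all solutions and $t\ge0$, and that for every nonempty compact $\Theta\subset\mathbb{R}^l$ there exist $K_2>K_1>0$ with $K_1|x|^2\le V_\vartheta(x)\le Q_\vartheta(x)\le K_2|x|^2$ for all $x\in\mathbb{R}^n$, $\vartheta\in\Theta$. Let $T>0$, let $a:\mathbb{R}^n\to\mathbb{R}_+$ be continuous, positive definite with $\sup\{|x|^{-2}a(x):x\ne0\}<+\infty$, and let $\tilde N>N$ be an integer. Then there exist constants $\tilde M_{\theta,\hat\theta}>0$, $(\theta,\hat\theta)\in\mathbb{R}^l\times\mathbb{R}^l$, such that for every $\theta\in\mathbb{R}^l$, $x_0\in\mathbb{R}^n$, $\hat\theta_0\in\mathbb{R}^l$ the solution of the hybrid closed-loop system (see context) with $x(0)=x_0$, $\hat\theta(0)=\hat\theta_0$ satisfies $|x(t)|\le\tilde M_{\theta,\hat\theta_0}e^{-\omega_\theta t}|x_0|$ for all $t\ge0$.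
   Context: Hybrid closed-loop system: event times $\tau_0=0$, $\tau_{i+1}=\min(\tau_i+T,r_i)$. On $[\tau_i,\tau_{i+1})$: $u(t)=k(\hat\theta(\tau_i),x(t))$, $\hat\theta(t)=\hat\theta(\tau_i)$, $x$ continuous solving $\dot x=f(x,u)+g(x,u)\theta$. Trigger: for $x(\tau_i)\ne0$, $r_i=\inf\{t>\tau_i:V_{\hat\theta(\tau_i)}(x(t))=Q_{\hat\theta(\tau_i)}(x(\tau_i))+a(x(\tau_i))\}$ ($\inf\emptyset=+\infty$); for $x(\tau_i)=0$, $r_i=\tau_i+T$. With $p(t,\sigma)=x(t)-x(\sigma)-\int_\sigma^tf(x(s),u(s))ds$, $q(t,\sigma)=\int_\sigma^tg(x(s),u(s))ds$, $\mu_{i+1}=\min\{\tau_j:j\in\{0,\dots,i\},\tau_j\ge\tau_{i+1}-\tilde NT\}$, $G=\iint_{[\mu_{i+1},\tau_{i+1}]^2}q'(t,\sigma)q(t,\sigma)d\sigma dt$, $Z=\iint_{[\mu_{i+1},\tau_{i+1}]^2}q'(t,\sigma)p(t,\sigma)d\sigma dt$, the update is $\hat\theta(\tau_{i+1})=\arg\min\{|\vartheta-\hat\theta(\tau_i)|^2:\vartheta\in\mathbb{R}^l,\ Z=G\vartheta\}$. Positive definite: $V(0)=0$, $V(x)>0$ for $x\ne0$; radially unbounded: sublevel sets compact. *)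

(* Defs.v *)
From Stdlib Require Import Reals Lra List.
From Coquelicot Require Import Coquelicot.
From mathcomp Require Import ssreflect ssrfun ssrbool eqtype ssrnat seq fintype bigop.
Open Scope R_scope.

Definition vec (n : nat) := 'I_n -> R.
Definition mat (n l : nat) := 'I_n -> 'I_l -> R.

Definition vzero {n : nat} : vec n := fun _ => 0.
Definition mzero {n l : nat} : mat n l := fun _ _ => 0.
Definition vadd {n : nat} (x y : vec n) : vec n := fun i => x i + y i.
Definition vsub {n : nat} (x y : vec n) : vec n := fun i => x i - y i.
Definition vscal {n : nat} (c : R) (x : vec n) : vec n := fun i => c * x i.
Definition rsum {n : nat} (F : 'I_n -> R) : R := \big[Rplus/0]_(i < n) F i.
Definition vnorm {n : nat} (x : vec n) : R := sqrt (rsum (fun i => x i ^ 2)).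
Definition mvmul {n l : nat} (A : mat n l) (v : vec l) : vec n :=
  fun i => rsum (fun j => A i j * v j).

Definition vcont1 {p : nat} (F : vec p -> R) : Prop :=
  forall x eps, 0 < eps -> exists delta, 0 < delta /\
    forall x', vnorm (vsub x' x) < delta -> Rabs (F x' - F x) < eps.
Definition vcont2 {p q : nat} (F : vec p -> vec q -> R) : Prop :=
  forall x y eps, 0 < eps -> exists delta, 0 < delta /\
    forall x' y', vnorm (vsub x' x) < delta -> vnorm (vsub y' y) < delta ->
      Rabs (F x' y' - F x y) < eps.

Fixpoint dd {p q : nat} (ds : list (vec p * vec q)) (F : vec p -> vec q -> R)
  : vec p -> vec q -> R :=
  match ds with
  | nil => F
  | (v, w) :: ds' => fun x y =>
      Derive (fun h => dd ds' F (vadd x (vscal h v)) (vadd y (vscal h w))) 0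
  end.
(* C^infinity: all iterated directional derivatives exist everywhere and are continuous *)
Definition smooth2 {p q : nat} (F : vec p -> vec q -> R) : Prop :=
  forall ds, vcont2 (dd ds F) /\
    forall v w x y,
      ex_derive (fun h => dd ds F (vadd x (vscal h v)) (vadd y (vscal h w))) 0.

Definition vderiv {n : nat} (x : R -> vec n) (t : R) (v : vec n) : Prop :=
  forall j, is_derive (fun s => x s j) t (v j).
Definition vrderiv {n : nat} (x : R -> vec n) (t : R) (v : vec n) : Prop :=
  forall j, filterlim (fun h => (x (t + h) j - x t j) / h) (at_right 0) (locally (v j)).
Definition cont_on {n : nat} (D : R -> Prop) (x : R -> vec n) : Prop :=
  forall t, D t -> forall eps, 0 < eps -> exists delta, 0 < delta /\
    forall s, D s -> Rabs (s - t) < delta -> vnorm (vsub (x s) (x t)) < eps.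

Definition is_sol {n : nat} (F : vec n -> vec n) (x : R -> vec n) : Prop :=
  cont_on (fun t => 0 <= t) x /\ vrderiv x 0 (F (x 0)) /\
  forall t, 0 < t -> vderiv x t (F (x t)).

(* global asymptotic stability of the origin (includes forward completeness) *)
Definition GAS {n : nat} (F : vec n -> vec n) : Prop :=
  (forall x0, exists x, is_sol F x /\ x 0 = x0) /\
  (forall eps, 0 < eps -> exists delta, 0 < delta /\
     forall x, is_sol F x -> vnorm (x 0) < delta -> forall t, 0 <= t -> vnorm (x t) < eps) /\
  (forall x, is_sol F x -> forall eps, 0 < eps ->
     exists T0, forall t, T0 <= t -> vnorm (x t) < eps).

Definition plant {n m l : nat} (f : vec n -> vec m -> vec n) (g : vec n -> vec m -> mat n l)
  (x : vec n) (u : vec m) (theta : vec l) : vec n :=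
  vadd (f x u) (mvmul (g x u) theta).
Definition cl_field {n m l : nat} (f : vec n -> vec m -> vec n) (g : vec n -> vec m -> mat n l)
  (k : vec l -> vec n -> vec m) (th : vec l) : vec n -> vec n :=
  fun x => plant f g x (k th x) th.

Definition posdef {n : nat} (V : vec n -> R) : Prop :=
  V vzero = 0 /\ forall x, x <> vzero -> 0 < V x.
Definition open_set {n : nat} (S : vec n -> Prop) : Prop :=
  forall x, S x -> exists r, 0 < r /\ forall y, vnorm (vsub y x) < r -> S y.
Definition compact_set {n : nat} (K : vec n -> Prop) : Prop :=
  forall (I : Type) (U : I -> vec n -> Prop),
    (forall i, open_set (U i)) -> (forall x, K x -> exists i, U i x) ->
    exists L : list I, forall x, K x -> exists i, In i L /\ U i x.
(* radially unbounded: all sublevel sets compact *)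
Definition rad_unbounded {n : nat} (V : vec n -> R) : Prop :=
  forall c, compact_set (fun x => V x <= c).

Definition H3_prop {n m l : nat} (f : vec n -> vec m -> vec n) (g : vec n -> vec m -> mat n l)
  (k : vec l -> vec n -> vec m) (N : nat) : Prop :=
  forall (tau : nat -> R) (theta : vec l) (d : nat -> vec l) (x : R -> vec n),
    tau 0%nat = 0 ->
    (forall i, (i < N)%nat -> tau i < tau i.+1) ->
    (forall i, (i <= N)%nat -> d i <> vzero) ->
    cont_on (fun t => 0 <= t <= tau N) x ->
    (forall i, (i < N)%nat ->
       vrderiv x (tau i) (plant f g (x (tau i)) (k (vadd theta (d i)) (x (tau i))) theta) /\
       (forall t, tau i < t < tau i.+1 ->
          vderiv x t (plant f g (x t) (k (vadd theta (d i)) (x t)) theta))) ->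
    (forall i j, (i < N)%nat -> (j <= i)%nat -> forall t, tau j <= t <= tau j.+1 ->
       mvmul (g (x t) (k (vadd theta (d j)) (x t))) (d i.+1) = vzero) ->
    forall t, 0 <= t <= tau N -> x t = vzero.

Definition p_fun {n m : nat} (f : vec n -> vec m -> vec n) (x : R -> vec n) (u : R -> vec m)
  (t s : R) : vec n :=
  fun j => x t j - x s j - RInt (fun r => f (x r) (u r) j) s t.
Definition q_fun {n m l : nat} (g : vec n -> vec m -> mat n l) (x : R -> vec n) (u : R -> vec m)
  (t s : R) : mat n l :=
  fun j c => RInt (fun r => g (x r) (u r) j c) s t.
Definition Gmat {n m l : nat} (g : vec n -> vec m -> mat n l) (x : R -> vec n) (u : R -> vec m)
  (a b : R) : mat l l :=
  fun c1 c2 => RInt (fun t => RInt (fun s =>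
    rsum (fun j => q_fun g x u t s j c1 * q_fun g x u t s j c2)) a b) a b.
Definition Zvec {n m l : nat} (f : vec n -> vec m -> vec n) (g : vec n -> vec m -> mat n l)
  (x : R -> vec n) (u : R -> vec m) (a b : R) : vec l :=
  fun c => RInt (fun t => RInt (fun s =>
    rsum (fun j => q_fun g x u t s j c * p_fun f x u t s j)) a b) a b.

Definition is_min (P : R -> Prop) (y : R) : Prop := P y /\ forall z, P z -> y <= z.

Definition mu_set (tau : nat -> R) (T : R) (Ntil i : nat) : R -> Prop :=
  fun y => exists j, (j <= i)%nat /\ y = tau j /\ tau i.+1 - INR Ntil * T <= tau j.

Definition hybrid_sol {n m l : nat} (f : vec n -> vec m -> vec n) (g : vec n -> vec m -> mat n l)
  (k : vec l -> vec n -> vec m) (V Q : vec l -> vec n -> R) (a : vec n -> R)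
  (T : R) (Ntil : nat) (theta : vec l)
  (x : R -> vec n) (u : R -> vec m) (th : R -> vec l) (tau : nat -> R) : Prop :=
  tau 0%nat = 0 /\
  (forall t, 0 <= t -> exists i, tau i <= t < tau i.+1) /\
  cont_on (fun t => 0 <= t) x /\
  forall i : nat,
    (forall t, tau i <= t < tau i.+1 -> u t = k (th (tau i)) (x t) /\ th t = th (tau i)) /\
    vrderiv x (tau i) (plant f g (x (tau i)) (k (th (tau i)) (x (tau i))) theta) /\
    (forall t, tau i < t < tau i.+1 -> vderiv x t (plant f g (x t) (u t) theta)) /\
    (x (tau i) = vzero -> tau i.+1 = tau i + T) /\
    (x (tau i) <> vzero ->
       Rbar.Finite (tau i.+1) = Rbar_min (Rbar.Finite (tau i + T))
         (Glb_Rbar (fun t => tau i < t /\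
            V (th (tau i)) (x t) = Q (th (tau i)) (x (tau i)) + a (x (tau i))))) /\
    (forall mu, is_min (mu_set tau T Ntil i) mu ->
       mvmul (Gmat g x u mu (tau i.+1)) (th (tau i.+1)) = Zvec f g x u mu (tau i.+1) /\
       forall v : vec l, mvmul (Gmat g x u mu (tau i.+1)) v = Zvec f g x u mu (tau i.+1) ->
         vnorm (vsub (th (tau i.+1)) (th (tau i))) <= vnorm (vsub v (th (tau i)))).

(* Main.v *)
From HB Require Import structures.
Require Import Defs.
From Stdlib Require Import Reals Lra Classical ClassicalEpsilon FunctionalExtensionality List.
From Coquelicot Require Import Coquelicot.
From mathcomp Require Import ssreflect ssrfun ssrbool eqtype ssrnat seq fintype finfun bigop.
Open Scope R_scope.


Lemma Rplus_assoc' : associative Rplus. Proof. move=> *; ring. Qed.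
Lemma Rmult_assoc' : associative Rmult. Proof. move=> *; ring. Qed.
Lemma Rplus_0_l' : left_id 0 Rplus. Proof. move=> *; ring. Qed.
Lemma Rmult_1_l' : left_id 1 Rmult. Proof. move=> *; ring. Qed.
HB.instance Definition _ := Monoid.isComLaw.Build R 0 Rplus Rplus_assoc' Rplus_comm Rplus_0_l'.
HB.instance Definition _ := Monoid.isComLaw.Build R 1 Rmult Rmult_assoc' Rmult_comm Rmult_1_l'.
HB.instance Definition _ := Monoid.isMulLaw.Build R 0 Rmult Rmult_0_l Rmult_0_r.
HB.instance Definition _ := Monoid.isAddLaw.Build R Rmult Rplus Rmult_plus_distr_r Rmult_plus_distr_l.

Lemma rsum_plus {p} (F G : 'I_p -> R) : rsum (fun i => F i + G i) = rsum F + rsum G.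
Proof. by rewrite /rsum big_split. Qed.
Lemma rsum_scal {p} c (F : 'I_p -> R) : rsum (fun i => c * F i) = c * rsum F.
Proof. by rewrite /rsum big_distrr. Qed.
Lemma rsum_swap {p q} (F : 'I_p -> 'I_q -> R) :
  rsum (fun i => rsum (fun j => F i j)) = rsum (fun j => rsum (fun i => F i j)).
Proof. rewrite /rsum; exact: exchange_big. Qed.
Lemma rsum_ext {p} (F G : 'I_p -> R) : (forall i, F i = G i) -> rsum F = rsum G.
Proof. move=> H; rewrite /rsum; apply: eq_bigr => i _; exact: H. Qed.

Lemma rsum_ge0 {p} (F : 'I_p -> R) : (forall i, 0 <= F i) -> 0 <= rsum F.
Proof.
move=> H; rewrite /rsum; elim/big_ind: _; [lra| move=> x y; lra| move=> j _; exact: H].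
Qed.
Lemma rsum_le {p} (F G : 'I_p -> R) : (forall i, F i <= G i) -> rsum F <= rsum G.
Proof.
move=> H; rewrite /rsum; elim/big_ind2: _; [lra| move=> *; lra| move=> j _; exact: H].
Qed.
Lemma rsum_term_le {p} (F : 'I_p -> R) i : (forall i, 0 <= F i) -> F i <= rsum F.
Proof.
move=> H; rewrite /rsum (bigD1 i) //=.
rewrite -{1}(Rplus_0_r (F i)); apply: Rplus_le_compat_l.
elim/big_ind: _; [lra| move=> *; lra| move=> j _; exact: H].
Qed.
Lemma rsum_abs {p} (F : 'I_p -> R) : Rabs (rsum F) <= rsum (fun i => Rabs (F i)).
Proof.
rewrite /rsum; elim/big_ind2: _ => //.
- rewrite Rabs_R0; lra.
- move=> x1 x2 y1 y2 h1 h2; apply: Rle_trans (Rabs_triang _ _) _; lra.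
- move=> i _; lra.
Qed.
Lemma rsum0 {p} : rsum (fun _ : 'I_p => 0) = 0.
Proof. rewrite /rsum; elim/big_ind: _ => //; move=> *; lra. Qed.
Lemma rsum_opp {p} (F : 'I_p -> R) : rsum (fun i => - F i) = - rsum F.
Proof. rewrite (rsum_ext _ (fun i => -1 * F i)) ?rsum_scal; first ring.
move=> i; ring. Qed.
Lemma rsum_minus {p} (F G : 'I_p -> R) : rsum (fun i => F i - G i) = rsum F - rsum G.
Proof. rewrite /Rminus -rsum_opp -rsum_plus //. Qed.
Lemma rsum_const {p} c : rsum (fun _ : 'I_p => c) = INR p * c.
Proof.
rewrite /rsum big_const_ord; elim: p => [|p IH] /=; first lra.
rewrite IH; case: p {IH} => [|p] /=; ring.
Qed.
Lemma rsum_le_const {p} (F : 'I_p -> R) c : (forall i, F i <= c) -> rsum F <= INR p * c.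
Proof. move=> H; rewrite -rsum_const; exact: rsum_le. Qed.

Lemma sumsq_ge0 {p} (x : vec p) : 0 <= rsum (fun i => x i ^ 2).
Proof. apply: rsum_ge0 => i; nra. Qed.
Lemma vnorm_ge0 {p} (x : vec p) : 0 <= vnorm x.
Proof. exact: sqrt_pos. Qed.
Lemma vnorm_sq {p} (x : vec p) : vnorm x ^ 2 = rsum (fun i => x i ^ 2).
Proof. rewrite /vnorm /= Rmult_1_r sqrt_sqrt //; exact: sumsq_ge0. Qed.
Lemma coord_le_vnorm {p} (x : vec p) i : Rabs (x i) <= vnorm x.
Proof.
rewrite /vnorm -sqrt_Rsqr_abs; apply: sqrt_le_1_alt.
rewrite /Rsqr; have := rsum_term_le (fun i => x i ^ 2) i (fun j => ltac:(nra)) => /=; lra.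
Qed.
Lemma sq_le_sumabs_sq {p} (x : 'I_p -> R) :
  rsum (fun i => x i ^ 2) <= (rsum (fun i => Rabs (x i))) ^ 2.
Proof.
rewrite /rsum.
suff : (fun a b => 0 <= a /\ 0 <= b /\ a <= b ^ 2)
  (\big[Rplus/0]_(i < p) x i ^ 2) (\big[Rplus/0]_(i < p) Rabs (x i)) by case=> _ [].
apply: (big_ind2 (fun a b => 0 <= a /\ 0 <= b /\ a <= b ^ 2)).
- lra.
- move=> a1 a2 b1 b2 [h1 [h2 h3]] [h4 [h5 h6]]; split; [lra|split;[lra|nra]].
- move=> i _; split; [nra|split; [exact: Rabs_pos|]].
  have := Rsqr_abs (x i); rewrite /Rsqr /= => e; nra.
Qed.
Lemma vnorm_le_l1 {p} (x : vec p) : vnorm x <= rsum (fun i => Rabs (x i)).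
Proof.
rewrite /vnorm; have h0 : 0 <= rsum (fun i => Rabs (x i)) by apply: rsum_ge0 => i; exact: Rabs_pos.
rewrite -(sqrt_pow2 _ h0); apply: sqrt_le_1_alt; exact: sq_le_sumabs_sq.
Qed.
Lemma vnorm_mono {p} (a b : vec p) : (forall i, Rabs (a i) <= Rabs (b i)) -> vnorm a <= vnorm b.
Proof.
move=> H; apply: sqrt_le_1_alt; apply: rsum_le => i.
have := Rsqr_abs (a i); have := Rsqr_abs (b i); rewrite /Rsqr /= => e1 e2.
rewrite !Rmult_1_r e1 e2; have := H i; have := Rabs_pos (a i); nra.
Qed.
Lemma vnorm_vzero {p} : vnorm (@vzero p) = 0.
Proof. rewrite /vnorm /vzero (rsum_ext _ (fun _ => 0)) ?rsum0 ?sqrt_0 // => i; ring. Qed.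
Lemma vnorm_eq0 {p} (x : vec p) : vnorm x = 0 -> x = vzero.
Proof.
move=> h; apply: functional_extensionality => i; rewrite /vzero.
have := coord_le_vnorm x i; rewrite h => h1; have := Rabs_pos (x i) => h2.
have : Rabs (x i) = 0 by lra. exact: Rabs_eq_0.
Qed.
Lemma vnorm_pos {p} (x : vec p) : x <> vzero -> 0 < vnorm x.
Proof. move=> h; case: (vnorm_ge0 x) => // e; exfalso; apply: h; exact: vnorm_eq0. Qed.
Lemma vnorm_le_iff_sq {p} (x : vec p) c : 0 <= c -> rsum (fun i => x i ^ 2) <= c ^ 2 -> vnorm x <= c.
Proof. move=> hc h; rewrite /vnorm -(sqrt_pow2 c hc); exact: sqrt_le_1_alt. Qed.


Definition box {p} (lo : vec p) (s : R) : vec p -> Prop :=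
  fun y => forall c, lo c <= y c <= lo c + s.

Lemma in_mem_In {T : eqType} (x : T) (s : seq T) : x \in s -> List.In x s.
Proof. elim: s => //= a s IH; rewrite in_cons => /orP [/eqP ->|h]; [by left|right; exact: IH]. Qed.

Section Compact.
Variable p : nat.
Variables (I : Type) (U : I -> vec p -> Prop).
Definition FS (B : vec p -> Prop) := exists L : list I, forall x, B x -> exists i, List.In i L /\ U i x.

Definition subbox (lo : vec p) (s : R) (b : {ffun 'I_p -> bool}) : vec p :=
  fun c => lo c + (if b c then s / 2 else 0).

Lemma split_step lo s : 0 <= s -> ~ FS (box lo s) ->
  exists b, ~ FS (box (subbox lo s b) (s / 2)).
Proof.
move=> hs hn; apply: NNPP => hall; apply: hn.
have H : forall b, FS (box (subbox lo s b) (s / 2)).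
  move=> b; apply: NNPP => h; apply: hall; by exists b.
pose Lb := fun b => proj1_sig (constructive_indefinite_description _ (H b)).
have HL : forall b x, box (subbox lo s b) (s / 2) x -> exists i, List.In i (Lb b) /\ U i x.
  move=> b; rewrite /Lb; case: (constructive_indefinite_description _ _) => /= L; exact.
exists (flat_map Lb (enum {ffun 'I_p -> bool})) => y hy.
pose b := [ffun c => if Rle_dec (lo c + s / 2) (y c) then true else false].
have hyb : box (subbox lo s b) (s / 2) y.
  move=> c; rewrite /subbox /b ffunE; case: Rle_dec => h /=; have := hy c; lra.
case: (HL b y hyb) => i [hi hU]; exists i; split => //.
apply/in_flat_map; exists b; split => //; apply: in_mem_In; exact: mem_enum.
Qed.

Lemma ex_nxt : forall (ls : vec p * R), exists b : {ffun 'I_p -> bool},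
  0 <= ls.2 -> ~ FS (box ls.1 ls.2) -> ~ FS (box (subbox ls.1 ls.2 b) (ls.2 / 2)).
Proof.
move=> [lo s] /=; case: (classic (0 <= s /\ ~ FS (box lo s))) => [[h1 h2]|h].
- case: (split_step lo s h1 h2) => b hb; by exists b.
- exists [ffun _ => false] => h1 h2; exfalso; exact: h.
Qed.

Definition nxt (ls : vec p * R) := proj1_sig (constructive_indefinite_description _ (ex_nxt ls)).
Lemma nxtP ls : 0 <= ls.2 -> ~ FS (box ls.1 ls.2) -> ~ FS (box (subbox ls.1 ls.2 (nxt ls)) (ls.2 / 2)).
Proof. rewrite /nxt; case: (constructive_indefinite_description _ _) => /= b; exact. Qed.

Variables (lo0 : vec p) (s0 : R).
Fixpoint seqb (k : nat) : vec p * R :=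
  match k with
  | O => (lo0, s0)
  | S k' => let ls := seqb k' in (subbox ls.1 ls.2 (nxt ls), ls.2 / 2)
  end.

Hypothesis hs0 : 0 <= s0.
Lemma seqb_s k : (seqb k).2 = s0 * (/ 2) ^ k.
Proof. elim: k => [|k IH] /=; first ring. rewrite IH; field. Qed.
Lemma seqb_s_ge0 k : 0 <= (seqb k).2.
Proof. rewrite seqb_s; apply: Rmult_le_pos => //; apply: pow_le; lra. Qed.
Lemma seqb_nFS k : ~ FS (box lo0 s0) -> ~ FS (box (seqb k).1 (seqb k).2).
Proof. move=> h; elim: k => [|k IH] //=; apply: nxtP => //; exact: seqb_s_ge0. Qed.
Lemma seqb_mono1 k c : (seqb k).1 c <= (seqb k.+1).1 c /\
   (seqb k.+1).1 c + (seqb k.+1).2 <= (seqb k).1 c + (seqb k).2.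
Proof.
rewrite /= /subbox; have := seqb_s_ge0 k; case: (nxt _ c) => /=; lra.
Qed.
Lemma seqb_mono k d c : (seqb k).1 c <= (seqb (k + d)).1 c /\
   (seqb (k + d)).1 c + (seqb (k + d)).2 <= (seqb k).1 c + (seqb k).2.
Proof.
elim: d => [|d IH]; first by rewrite addn0; lra.
rewrite addnS; have := seqb_mono1 (k + d) c; lra.
Qed.
End Compact.

Lemma box_compact {p} (lo : vec p) s : 0 <= s -> compact_set (box lo s).
Proof.
move=> hs I U Uop Ucov; apply: NNPP => hn.
have hnFS : ~ FS p I U (box lo s) by [].
pose sq := seqb p I U lo s.
have hub : forall c k k', (sq k').1 c <= (sq k).1 c + (sq k).2.
  move=> c k k'; case: (leqP k k') => h.
  - rewrite -(subnKC h); have [h1 h2] := seqb_mono p I U lo s hs k (k' - k) c.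
    have := seqb_s_ge0 p I U lo s hs (k + (k' - k)); rewrite /sq; lra.
  - have h' : (k' <= k)%nat by apply: ltnW.
    rewrite -(subnKC h'); have [h1 h2] := seqb_mono p I U lo s hs k' (k - k') c.
    have := seqb_s_ge0 p I U lo s hs (k' + (k - k')); rewrite /sq. lra.
have hpt : forall c, {m | is_lub (fun v => exists k, v = (sq k).1 c) m}.
  move=> c; apply: completeness.
  - exists ((sq 0%nat).1 c + (sq 0%nat).2) => v [k ->]; exact: hub.
  - by exists ((sq 0%nat).1 c), 0%nat.
pose pt := fun c => proj1_sig (hpt c).
have hptb : forall k c, (sq k).1 c <= pt c <= (sq k).1 c + (sq k).2.
  move=> k c; rewrite /pt; case: (hpt c) => m [h1 h2] /=; split.
  - apply: h1; by exists k.
  - apply: h2 => v [k' ->]; exact: hub.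
have hpt0 : box lo s pt by move=> c; have := hptb 0%nat c.
case: (Ucov pt hpt0) => i hi.
case: (Uop i pt hi) => r [hr hball].
have [K hK] : exists K, s * (/ 2) ^ K * (INR p + 1) < r.
  case: (pow_lt_1_zero (/ 2) ltac:(rewrite Rabs_pos_eq; lra) (r / ((s + 1) * (INR p + 1)))) => [|N HN].
  - apply: Rdiv_lt_0_compat => //; have := pos_INR p; nra.
  exists N; have := HN N (le_n N); rewrite Rabs_pos_eq; last by apply: pow_le; lra.
  move=> h; have hp := pos_INR p.
  have h2 : (/ 2) ^ N * ((s + 1) * (INR p + 1)) < r.
    have e : r / ((s + 1) * (INR p + 1)) * ((s + 1) * (INR p + 1)) = r by field; nra.
    rewrite -[X in _ < X]e; apply: Rmult_lt_compat_r => //; nra.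
  have : 0 <= (/2) ^ N by apply: pow_le; lra.
  nra.
apply: (seqb_nFS p I U lo s hs K hnFS); exists (i :: nil) => y hy; exists i; split; first by left.
apply: hball; apply: Rle_lt_trans (vnorm_le_l1 _) _.
apply: Rle_lt_trans hK; rewrite -(seqb_s p I U lo s K).
apply: Rle_trans (rsum_le_const _ ((seqb p I U lo s K).2) _) _.
- move=> c; rewrite /vsub; have := hy c; have := hptb K c; rewrite /sq; move=> h1 h2.
  apply: Rabs_le; lra.
- have := seqb_s_ge0 p I U lo s hs K; nra.
Qed.


Lemma cont_pt_intro (f : R -> R) x :
  (forall eps, 0 < eps -> exists d, 0 < d /\ forall y, Rabs (y - x) < d -> Rabs (f y - f x) < eps) ->
  continuous f x.
Proof.
move=> H; apply/continuity_pt_filterlim => eps he.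
case: (H eps he) => d [hd Hd]; exists d; split => // y [_ hy]; exact: Hd.
Qed.
Lemma cont_pt_elim (f : R -> R) x : continuous f x ->
  forall eps, 0 < eps -> exists d, 0 < d /\ forall y, Rabs (y - x) < d -> Rabs (f y - f x) < eps.
Proof.
move/continuity_pt_filterlim => H eps he; case: (H eps he) => d [hd Hd]; exists d; split => // y hy.
case: (Req_dec y x) => [->|hne]; first by rewrite Rminus_diag Rabs_R0.
apply: Hd; split => //; split => //; by apply: not_eq_sym.
Qed.

Definition rcont (D : R -> Prop) (phi : R -> R) : Prop :=
  forall t, D t -> forall eps, 0 < eps -> exists d, 0 < d /\
    forall s, D s -> Rabs (s - t) < d -> Rabs (phi s - phi t) < eps.

Definition clamp (a b t : R) := Rmin (Rmax t a) b.
Lemma clamp_in a b t : a <= b -> a <= clamp a b t <= b.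
Proof. rewrite /clamp => h; split; [apply: Rmin_glb => //; exact: Rmax_r| exact: Rmin_r]. Qed.
Lemma clamp_id a b t : a <= t <= b -> clamp a b t = t.
Proof. rewrite /clamp => h; rewrite Rmax_left ?Rmin_left; lra. Qed.
Lemma clamp_lip a b s t : a <= b -> Rabs (clamp a b s - clamp a b t) <= Rabs (s - t).
Proof.
rewrite /clamp => h.
unfold Rmin, Rmax; repeat destruct Rle_dec; split_Rabs; lra.
Qed.

Lemma rcont_clamp a b phi : a <= b -> rcont (fun t => a <= t <= b) phi ->
  forall t, continuous (fun s => phi (clamp a b s)) t.
Proof.
move=> hab H t; apply: cont_pt_intro => eps he.
case: (H (clamp a b t) (clamp_in a b t hab) eps he) => d [hd Hd].
exists d; split => // y hy; apply: Hd; first exact: clamp_in.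
apply: Rle_lt_trans (clamp_lip _ _ _ _ hab) hy.
Qed.

Lemma rcont_sub D phi D' : (forall t, D' t -> D t) -> rcont D phi -> rcont D' phi.
Proof.
move=> hD H t ht eps he; case: (H t (hD t ht) eps he) => d [hd Hd]; exists d; split => //.
move=> s hs; exact: Hd (hD s hs).
Qed.


Lemma fin_delta {p} (P : 'I_p -> R -> Prop) :
  (forall c d d', 0 < d' <= d -> P c d -> P c d') ->
  (forall c, exists d, 0 < d /\ P c d) -> exists d, 0 < d /\ forall c, P c d.
Proof.
move=> hm H.
suff : forall L : list 'I_p, exists d, 0 < d /\ forall c, List.In c L -> P c d.
  case/(_ (enum 'I_p)) => d [hd Hd]; exists d; split => // c; apply: Hd; apply: in_mem_In; exact: mem_enum.
elim => [|c L [d [hd Hd]]]; first by exists 1; split => //; lra.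
case: (H c) => d' [hd' Hd']; exists (Rmin d d'); split; first by apply: Rmin_glb_lt.
move=> c' /= [<-|hc]; apply: hm.
- split; [exact: Rmin_glb_lt| exact: Rmin_r]. exact: Hd'.
- split; [exact: Rmin_glb_lt| exact: Rmin_l]. exact: Hd.
Qed.

Lemma rcont_const D c : rcont D (fun _ => c).
Proof. move=> t _ eps he; exists 1; split; [lra|move=> s _ _; rewrite Rminus_diag Rabs_R0; lra]. Qed.
Lemma rcont_plus D f1 f2 : rcont D f1 -> rcont D f2 -> rcont D (fun r => f1 r + f2 r).
Proof.
move=> h1 h2 t ht eps he.
case: (h1 t ht (eps/2) ltac:(lra)) => d1 [hd1 H1]; case: (h2 t ht (eps/2) ltac:(lra)) => d2 [hd2 H2].
exists (Rmin d1 d2); split; first exact: Rmin_glb_lt.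
move=> s hs hst; have := H1 s hs (Rlt_le_trans _ _ _ hst (Rmin_l _ _)).
have := H2 s hs (Rlt_le_trans _ _ _ hst (Rmin_r _ _)); split_Rabs; lra.
Qed.
Lemma rcont_mult D f1 f2 : rcont D f1 -> rcont D f2 -> rcont D (fun r => f1 r * f2 r).
Proof.
move=> h1 h2 t ht eps he.
set A := Rabs (f1 t) + 1; set B := Rabs (f2 t) + 1.
have hA : 0 < A by rewrite /A; have := Rabs_pos (f1 t); lra.
have hB : 0 < B by rewrite /B; have := Rabs_pos (f2 t); lra.
set e := Rmin 1 (eps / (2 * (A + B))).
have he0 : 0 < e by apply: Rmin_glb_lt; [lra| apply: Rdiv_lt_0_compat; lra].
case: (h1 t ht e he0) => d1 [hd1 H1]; case: (h2 t ht e he0) => d2 [hd2 H2].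
exists (Rmin d1 d2); split; first exact: Rmin_glb_lt.
move=> s hs hst; have e1 := H1 s hs (Rlt_le_trans _ _ _ hst (Rmin_l _ _)).
have e2 := H2 s hs (Rlt_le_trans _ _ _ hst (Rmin_r _ _)).
have hee : e * (A + B) <= eps / 2.
  have : e <= eps / (2 * (A + B)) by exact: Rmin_r.
  move=> h; have : eps / (2 * (A + B)) * (A + B) = eps / 2 by field; lra.
  move=> h2'; nra.
have he1 : e <= 1 by exact: Rmin_l.
have -> : f1 s * f2 s - f1 t * f2 t = (f1 s - f1 t) * f2 s + f1 t * (f2 s - f2 t) by ring.
apply: Rle_lt_trans (Rabs_triang _ _) _; rewrite !Rabs_mult.
have hf2 : Rabs (f2 s) <= B by rewrite /B; have := Rabs_triang_inv (f2 s) (f2 t); lra.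
have : Rabs (f1 s - f1 t) * Rabs (f2 s) <= e * B.
  apply: Rmult_le_compat; try apply: Rabs_pos; lra.
have : Rabs (f1 t) * Rabs (f2 s - f2 t) <= A * e.
  apply: Rmult_le_compat; try apply: Rabs_pos; rewrite /A; lra.
nra.
Qed.
Lemma rcont_rsum {p} D (F : 'I_p -> R -> R) : (forall i, rcont D (F i)) ->
  rcont D (fun r => rsum (fun i => F i r)).
Proof.
move=> H t ht eps he.
set e := eps / (INR p + 1).
have hp := pos_INR p.
have he0 : 0 < e by apply: Rdiv_lt_0_compat; lra.
case: (fin_delta (fun i d => forall s, D s -> Rabs (s - t) < d -> Rabs (F i s - F i t) < e)).
- move=> c d d' hd Hd s hs h; apply: Hd => //; lra.
- move=> c; exact: H.
move=> d [hd Hd]; exists d; split => // s hs hst.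
rewrite -rsum_minus; apply: Rle_lt_trans (rsum_abs _) _.
apply: Rle_lt_trans (rsum_le_const _ e _) _.
- move=> i; apply: Rlt_le; exact: Hd.
- rewrite /e; have -> : INR p * (eps / (INR p + 1)) = eps - eps / (INR p + 1) by field; lra.
  have : 0 < eps / (INR p + 1) by apply: Rdiv_lt_0_compat; lra.
  lra.
Qed.

Lemma cont_on_coord {p} D (x : R -> vec p) c : cont_on D x -> rcont D (fun r => x r c).
Proof.
move=> H t ht eps he; case: (H t ht eps he) => d [hd Hd]; exists d; split => // s hs h.
apply: Rle_lt_trans (coord_le_vnorm (vsub (x s) (x t)) c) (Hd s hs h).
Qed.
Lemma cont_on_vec {p} D (F : R -> vec p) : (forall c, rcont D (fun r => F r c)) -> cont_on D F.
Proof.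
move=> H t ht eps he.
set e := eps / (INR p + 1).
have hp := pos_INR p.
have he0 : 0 < e by apply: Rdiv_lt_0_compat; lra.
case: (fin_delta (fun i d => forall s, D s -> Rabs (s - t) < d -> Rabs (F s i - F t i) < e)).
- move=> c d d' hd Hd s hs h; apply: Hd => //; lra.
- move=> c; exact: H.
move=> d [hd Hd]; exists d; split => // s hs hst.
apply: Rle_lt_trans (vnorm_le_l1 _) _.
apply: Rle_lt_trans (rsum_le_const _ e _) _.
- move=> i; apply: Rlt_le; exact: Hd.
- rewrite /e; have -> : INR p * (eps / (INR p + 1)) = eps - eps / (INR p + 1) by field; lra.
  have : 0 < eps / (INR p + 1) by apply: Rdiv_lt_0_compat; lra.
  lra.
Qed.
Lemma cont_on_const {p} D (v : vec p) : cont_on D (fun _ => v).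
Proof.
move=> t _ eps he; exists 1; split; first lra; move=> s _ _.
rewrite (_ : vsub v v = vzero) ?vnorm_vzero //; apply: functional_extensionality => i; rewrite /vsub /vzero; ring.
Qed.
Lemma cont_on_comp2 {p q} (F : vec p -> vec q -> R) D (x : R -> vec p) (y : R -> vec q) :
  vcont2 F -> cont_on D x -> cont_on D y -> rcont D (fun r => F (x r) (y r)).
Proof.
move=> hF hx hy t ht eps he.
case: (hF (x t) (y t) eps he) => d [hd Hd].
case: (hx t ht d hd) => d1 [hd1 H1]; case: (hy t ht d hd) => d2 [hd2 H2].
exists (Rmin d1 d2); split; first exact: Rmin_glb_lt.
move=> s hs hst; apply: Hd; [apply: H1 | apply: H2] => //;
  apply: Rlt_le_trans hst _; [exact: Rmin_l|exact: Rmin_r].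
Qed.


Lemma vadd_vscal_add {p} (x v : vec p) h0 h :
  vadd (vadd x (vscal h0 v)) (vscal h v) = vadd x (vscal (h0 + h) v).
Proof. apply: functional_extensionality => i; rewrite /vadd /vscal; ring. Qed.

Lemma dd_deriv {p q} (F : vec p -> vec q -> R) v w x y h0 : smooth2 F ->
  is_derive (fun h => F (vadd x (vscal h v)) (vadd y (vscal h w))) h0
    (dd ((v, w) :: nil) F (vadd x (vscal h0 v)) (vadd y (vscal h0 w))).
Proof.
move=> hs; rewrite /=.
set x' := vadd x (vscal h0 v); set y' := vadd y (vscal h0 w).
set psi := fun h => F (vadd x' (vscal h v)) (vadd y' (vscal h w)).
have hd : is_derive psi 0 (Derive psi 0) by apply: Derive_correct; exact: ((hs nil).2 v w x' y').
have := is_derive_comp psi (fun s => s - h0) h0 (Derive psi 0) 1.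
rewrite Rminus_diag => H.
have H2 : is_derive (fun s => psi (s - h0)) h0 (scal 1 (Derive psi 0)).
  apply: H => //. 
  have := is_derive_minus (fun s : R => s) (fun _ => h0) h0 one zero (is_derive_id h0) (is_derive_const h0 h0).
  by rewrite /minus /plus /opp /zero /one /=; rewrite Ropp_0 Rplus_0_r.
rewrite scal_one in H2.
apply: is_derive_ext H2 => s; rewrite /psi /x' /y' !vadd_vscal_add.
by rewrite (_ : h0 + (s - h0) = s) //; ring.
Qed.

Definition e_c {p} (c : 'I_p) : vec p := fun i => if i == c then 1 else 0.

Lemma vscal0 {p} (w : vec p) v : vadd w (vscal 0 v) = w.
Proof. apply: functional_extensionality => i; rewrite /vadd /vscal; ring. Qed.

Lemma derive_contpt f x l : is_derive f x l -> continuity_pt f x.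
Proof. move=> h; apply/continuity_pt_filterlim; apply: ex_derive_continuous; by exists l. Qed.

Lemma MVT_bound (phi dphi : R -> R) a M :
  (forall h, is_derive phi h (dphi h)) ->
  (forall h, Rmin 0 a <= h <= Rmax 0 a -> Rabs (dphi h) <= M) ->
  Rabs (phi a - phi 0) <= M * Rabs a.
Proof.
move=> hd hb.
case: (MVT_gen phi 0 a dphi) => [h _|h _|xi [hxi e]]; first exact: hd.
- exact: derive_contpt (hd h).
rewrite e Rminus_0_r Rabs_mult; apply: Rmult_le_compat_r; [exact: Rabs_pos| exact: hb].
Qed.

Lemma phase {p} (G : vec p -> R) (Dc : 'I_p -> vec p -> R) z0 z M :
  (forall c w h, is_derive (fun h => G (vadd w (vscal h (e_c c)))) h (Dc c (vadd w (vscal h (e_c c))))) ->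
  (forall c w, vnorm (vsub w z0) <= vnorm (vsub z z0) -> Rabs (Dc c w) <= M) ->
  Rabs (G z - G z0) <= INR p * M * vnorm (vsub z z0).
Proof.
move=> hd hb.
set N := vnorm (vsub z z0).
pose P (S : seq 'I_p) := fun i => if i \in S then z i else z0 i.
suff H : forall S, uniq S -> Rabs (G (P S) - G z0) <= INR (size S) * M * N.
  have := H (enum 'I_p) (enum_uniq _); rewrite size_enum_ord.
  rewrite (_ : P (enum 'I_p) = z) //; apply: functional_extensionality => i; by rewrite /P mem_enum.
elim => [|c S IH].
  rewrite /= (_ : P [::] = z0); first by rewrite Rminus_diag Rabs_R0; lra.
  by apply: functional_extensionality => i; rewrite /P.
rewrite cons_uniq; case/andP => hc hu.
set a := z c - z0 c.
have eP : P (c :: S) = vadd (P S) (vscal a (e_c c)).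
  apply: functional_extensionality => i; rewrite /P /vadd /vscal /e_c in_cons.
  case: eqP => [->|hne] /=; first by rewrite (negbTE hc) /a; ring.
  by rewrite Rmult_0_r Rplus_0_r.
have hstep : Rabs (G (P (c :: S)) - G (P S)) <= M * Rabs a.
  rewrite eP -{2}(vscal0 (P S) (e_c c)).
  apply: (MVT_bound (fun h => G (vadd (P S) (vscal h (e_c c))))
            (fun h => Dc c (vadd (P S) (vscal h (e_c c))))) => [h|h hh]; first exact: hd.
  apply: hb; apply: vnorm_mono => i; rewrite /vsub /vadd /vscal /e_c /P.
  case: eqP => [->|hne].
  - rewrite (negbTE hc) (_ : z0 c + h * 1 - z0 c = h); last ring.
    move: hh; rewrite /a /Rmin /Rmax; repeat case: Rle_dec; move=> *; split_Rabs; lra.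
  - rewrite Rmult_0_r Rplus_0_r; case: (i \in S); first lra.
    rewrite Rminus_diag Rabs_R0; exact: Rabs_pos.
have ha : Rabs a <= N by rewrite /a /N; exact: (coord_le_vnorm (vsub z z0) c).
have hM : 0 <= M.
  case: (hb c z (Rle_refl _)) => h; [apply: Rle_trans (Rabs_pos _) (Rlt_le _ _ h)|rewrite -h; exact: Rabs_pos].
have := IH hu; rewrite (_ : size (c :: S) = (size S).+1) // S_INR.
move=> h1; have : Rabs (G (P (c :: S)) - G z0) <= Rabs (G (P (c :: S)) - G (P S)) + Rabs (G (P S) - G z0).
  have -> : G (P (c :: S)) - G z0 = (G (P (c :: S)) - G (P S)) + (G (P S) - G z0) by ring.
  exact: Rabs_triang.
have : M * Rabs a <= M * N by apply: Rmult_le_compat_l.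
lra.
Qed.

Lemma vscal_vzero {p} (y : vec p) h : vadd y (vscal h vzero) = y.
Proof. apply: functional_extensionality => i; rewrite /vadd /vscal /vzero; ring. Qed.
Lemma vsub_self {p} (y : vec p) : vsub y y = vzero.
Proof. apply: functional_extensionality => i; rewrite /vsub /vzero; ring. Qed.

Lemma LL {p q} (F : vec p -> vec q -> R) : smooth2 F -> forall x0 y0,
  exists d, 0 < d /\ exists L, 0 <= L /\ forall x y,
    vnorm (vsub x x0) < d -> vnorm (vsub y y0) < d ->
    Rabs (F x y - F x0 y0) <= L * (vnorm (vsub x x0) + vnorm (vsub y y0)).
Proof.
move=> hs x0 y0.
pose Dx (c : 'I_p) := dd ((e_c c, vzero) :: nil) F.
pose Dy (c : 'I_q) := dd ((vzero, e_c c) :: nil) F.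
have PM : forall (G : vec p -> vec q -> R), vcont2 G -> forall d d', 0 < d' <= d ->
   (forall x' y', vnorm (vsub x' x0) < d -> vnorm (vsub y' y0) < d -> Rabs (G x' y' - G x0 y0) < 1) ->
   (forall x' y', vnorm (vsub x' x0) < d' -> vnorm (vsub y' y0) < d' -> Rabs (G x' y' - G x0 y0) < 1).
  move=> G _ d d' hd H x' y' h1 h2; apply: H; lra.
case: (fin_delta (fun c d => forall x' y', vnorm (vsub x' x0) < d -> vnorm (vsub y' y0) < d ->
          Rabs (Dx c x' y' - Dx c x0 y0) < 1)).
- move=> c; apply: PM; exact: (hs _).1.
- move=> c; apply: ((hs _).1 x0 y0 1); lra.
move=> d1 [hd1 H1].
case: (fin_delta (fun c d => forall x' y', vnorm (vsub x' x0) < d -> vnorm (vsub y' y0) < d ->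
          Rabs (Dy c x' y' - Dy c x0 y0) < 1)).
- move=> c; apply: PM; exact: (hs _).1.
- move=> c; apply: ((hs _).1 x0 y0 1); lra.
move=> d2 [hd2 H2].
set M1 := rsum (fun c => Rabs (Dx c x0 y0) + 1).
set M2 := rsum (fun c => Rabs (Dy c x0 y0) + 1).
have hM1 : 0 <= M1 by apply: rsum_ge0 => c; have := Rabs_pos (Dx c x0 y0); lra.
have hM2 : 0 <= M2 by apply: rsum_ge0 => c; have := Rabs_pos (Dy c x0 y0); lra.
exists (Rmin d1 d2); split; first exact: Rmin_glb_lt.
exists (INR p * M1 + INR q * M2); split.
  have := pos_INR p; have := pos_INR q; nra.
move=> x y hx hy.
have hx1 : vnorm (vsub x x0) < d1 by apply: Rlt_le_trans hx (Rmin_l _ _).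
have hx2 : vnorm (vsub x x0) < d2 by apply: Rlt_le_trans hx (Rmin_r _ _).
have hy1 : vnorm (vsub y y0) < d1 by apply: Rlt_le_trans hy (Rmin_l _ _).
have hy2 : vnorm (vsub y y0) < d2 by apply: Rlt_le_trans hy (Rmin_r _ _).
have P1 : Rabs (F x y0 - F x0 y0) <= INR p * M1 * vnorm (vsub x x0).
  apply: (phase (fun w => F w y0) (fun c w => Dx c w y0)).
  - move=> c w h; have := dd_deriv F (e_c c) vzero w y0 h hs.
    rewrite !vscal_vzero => H; apply: is_derive_ext H => t; by rewrite vscal_vzero.
  - move=> c w hw.
    have h1 : vnorm (vsub w x0) < d1 by lra.
    have h2 : vnorm (vsub y0 y0) < d1 by rewrite vsub_self vnorm_vzero.
    have := H1 c w y0 h1 h2.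
    have := rsum_term_le (fun c => Rabs (Dx c x0 y0) + 1) c (fun c => ltac:(have := Rabs_pos (Dx c x0 y0); lra)).
    rewrite -/M1 => hh hh2; have := Rabs_triang_inv (Dx c w y0) (Dx c x0 y0); lra.
have P2 : Rabs (F x y - F x y0) <= INR q * M2 * vnorm (vsub y y0).
  apply: (phase (fun w => F x w) (fun c w => Dy c x w)).
  - move=> c w h; have := dd_deriv F vzero (e_c c) x w h hs.
    rewrite !vscal_vzero => H; apply: is_derive_ext H => t; by rewrite vscal_vzero.
  - move=> c w hw.
    have h2 : vnorm (vsub w y0) < d2 by lra.
    have := H2 c x w hx2 h2.
    have := rsum_term_le (fun c => Rabs (Dy c x0 y0) + 1) c (fun c => ltac:(have := Rabs_pos (Dy c x0 y0); lra)).
    rewrite -/M2 => hh hh2; have := Rabs_triang_inv (Dy c x w) (Dy c x0 y0); lra.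
have : Rabs (F x y - F x0 y0) <= Rabs (F x y - F x y0) + Rabs (F x y0 - F x0 y0).
  have -> : F x y - F x0 y0 = (F x y - F x y0) + (F x y0 - F x0 y0) by ring.
  exact: Rabs_triang.
have e1 := vnorm_ge0 (vsub x x0); have e2 := vnorm_ge0 (vsub y y0).
have e3 : 0 <= INR p * M1 by apply: Rmult_le_pos => //; exact: pos_INR.
have e4 : 0 <= INR q * M2 by apply: Rmult_le_pos => //; exact: pos_INR.
have : 0 <= INR p * M1 * vnorm (vsub y y0) by exact: Rmult_le_pos.
have : 0 <= INR q * M2 * vnorm (vsub x x0) by exact: Rmult_le_pos.
lra.
Qed.


Lemma fin_choice {p} (P : 'I_p -> R -> R -> Prop) :
  (forall c d d' L L', 0 < d' <= d -> L <= L' -> P c d L -> P c d' L') ->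
  (forall c, exists d, 0 < d /\ exists L, 0 <= L /\ P c d L) ->
  exists d, 0 < d /\ exists L, 0 <= L /\ forall c, P c d L.
Proof.
move=> hm H.
case: (fin_delta (fun c d => exists L, 0 <= L /\ P c d L)).
- move=> c d d' hd [L [hL HL]]; exists L; split => //; apply: hm HL => //; lra.
- exact: H.
move=> d [hd Hd].
pose Lc := fun c => proj1_sig (constructive_indefinite_description _ (Hd c)).
have HL : forall c, 0 <= Lc c /\ P c d (Lc c).
  move=> c; rewrite /Lc; case: (constructive_indefinite_description _ _) => //.
exists d; split => //; exists (rsum Lc); split; first by apply: rsum_ge0 => c; case: (HL c).
move=> c; case: (HL c) => h1 h2; apply: hm h2; [lra| apply: rsum_term_le => c'; by case: (HL c')].
Qed.

Lemma vsub_vzero {p} (z : vec p) : vsub z vzero = z.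
Proof. apply: functional_extensionality => i; rewrite /vsub /vzero; ring. Qed.

Lemma k_lin0 {l n m} (k : vec l -> vec n -> vec m) th :
  (forall j, smooth2 (fun th x => k th x j)) -> (forall th, k th vzero = vzero) ->
  exists d, 0 < d /\ exists L, 0 <= L /\ forall z, vnorm z < d -> vnorm (k th z) <= L * vnorm z.
Proof.
move=> hk hk0.
case: (fin_choice (fun j d L => forall z, vnorm z < d -> Rabs (k th z j) <= L * vnorm z)).
- move=> c d d' L L' hd hL H z hz; apply: Rle_trans (H z ltac:(lra)) _.
  apply: Rmult_le_compat_r => //; exact: vnorm_ge0.
- move=> j; case: (LL _ (hk j) th vzero) => d [hd [L [hL H]]].
  exists d; split => //; exists L; split => // z hz.
  have := H th z; rewrite vsub_self vnorm_vzero vsub_vzero hk0 /vzero Rminus_0_r Rplus_0_l.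
  apply => //.
move=> d [hd [L [hL H]]]; exists d; split => //; exists (INR m * L); split.
  apply: Rmult_le_pos => //; exact: pos_INR.
move=> z hz; apply: Rle_trans (vnorm_le_l1 _) _.
rewrite Rmult_assoc; apply: rsum_le_const => j; exact: H.
Qed.

Lemma field_lin0 {n m l} (f : vec n -> vec m -> vec n) (g : vec n -> vec m -> mat n l)
  (k : vec l -> vec n -> vec m) (th theta : vec l) :
  (forall j, smooth2 (fun x u => f x u j)) ->
  (forall j c, smooth2 (fun x u => g x u j c)) ->
  (forall j, smooth2 (fun th x => k th x j)) ->
  f vzero vzero = vzero -> g vzero vzero = mzero -> (forall th, k th vzero = vzero) ->
  exists d, 0 < d /\ exists L, 0 <= L /\ forall z, vnorm z < d -> forall j,
    Rabs (plant f g z (k th z) theta j) <= L * vnorm z.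
Proof.
move=> hf hg hk hf0 hg0 hk0.
case: (k_lin0 k th hk hk0) => dk [hdk [Lk [hLk Hk]]].
have PM : forall (Phi : vec n -> vec m -> R) (d d' L L' : R), 0 < d' <= d -> L <= L' ->
  (forall x u, vnorm x < d -> vnorm u < d -> Rabs (Phi x u) <= L * (vnorm x + vnorm u)) ->
  (forall x u, vnorm x < d' -> vnorm u < d' -> Rabs (Phi x u) <= L' * (vnorm x + vnorm u)).
  move=> Phi d d' L L' hd hL H x u hx hu.
  have hx' : vnorm x < d by lra. have hu' : vnorm u < d by lra.
  apply: Rle_trans (H x u hx' hu') _.
  apply: Rmult_le_compat_r => //; have := vnorm_ge0 x; have := vnorm_ge0 u; lra.
have LL0 : forall Phi : vec n -> vec m -> R, smooth2 Phi -> Phi vzero vzero = 0 ->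
  exists d, 0 < d /\ exists L, 0 <= L /\
  (forall x u, vnorm x < d -> vnorm u < d -> Rabs (Phi x u) <= L * (vnorm x + vnorm u)).
  move=> Phi hs h0; case: (LL Phi hs vzero vzero) => d [hd [L [hL H]]].
  exists d; split => //; exists L; split => // x u hx hu.
  have := H x u; rewrite !vsub_vzero h0 Rminus_0_r; apply => //.
case: (fin_choice (fun j d L => forall x u, vnorm x < d -> vnorm u < d ->
          Rabs (f x u j) <= L * (vnorm x + vnorm u))).
- move=> c d d' L L'; exact: PM (fun x u => f x u c) d d' L L'.
- move=> j; apply: LL0 => //; by rewrite hf0.
move=> df [hdf [Lf [hLf Hf]]].
case: (fin_choice (fun j d L => forall c x u, vnorm x < d -> vnorm u < d ->
          Rabs (g x u j c) <= L * (vnorm x + vnorm u))).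
- move=> j d d' L L' hd hL H c; exact: PM (fun x u => g x u j c) d d' L L' hd hL (H c).
- move=> j; apply: (fin_choice (fun c d L => forall x u, vnorm x < d -> vnorm u < d ->
          Rabs (g x u j c) <= L * (vnorm x + vnorm u))).
  + move=> c d d' L L'; exact: PM (fun x u => g x u j c) d d' L L'.
  + move=> c; apply: LL0 => //; by rewrite hg0.
move=> dg [hdg [Lg [hLg Hg]]].
set K := INR m * Lk.
set dd0 := Rmin df dg.
have hdd0 : 0 < dd0 by apply: Rmin_glb_lt.
exists (Rmin dk (dd0 / (Lk + 1))); split.
  apply: Rmin_glb_lt => //; apply: Rdiv_lt_0_compat; lra.
set Th := rsum (fun c => Rabs (theta c)).
have hTh : 0 <= Th by apply: rsum_ge0 => c; exact: Rabs_pos.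
exists ((1 + Lk) * (Lf + Lg * Th)); split; first by apply: Rmult_le_pos; nra.
move=> z hz j.
have hz1 : vnorm z < dk by apply: Rlt_le_trans hz (Rmin_l _ _).
have hz2 : vnorm z < dd0 / (Lk + 1) by apply: Rlt_le_trans hz (Rmin_r _ _).
have hnz := vnorm_ge0 z.
have hku := Hk z hz1.
have hkn : vnorm (k th z) < dd0.
  apply: Rle_lt_trans hku _.
  have : vnorm z * (Lk + 1) < dd0.
    have e : dd0 / (Lk + 1) * (Lk + 1) = dd0 by field; lra.
    rewrite -[X in _ < X]e; apply: Rmult_lt_compat_r => //; lra.
  nra.
have hzd : vnorm z < dd0.
  have e : dd0 / (Lk + 1) * (Lk + 1) = dd0 by field; lra.
  have : 0 <= dd0/(Lk+1) by apply: Rlt_le; apply: Rdiv_lt_0_compat; lra.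
  nra.
have hzf : vnorm z < df by apply: Rlt_le_trans hzd (Rmin_l _ _).
have hzg : vnorm z < dg by apply: Rlt_le_trans hzd (Rmin_r _ _).
have hkf : vnorm (k th z) < df by apply: Rlt_le_trans hkn (Rmin_l _ _).
have hkg : vnorm (k th z) < dg by apply: Rlt_le_trans hkn (Rmin_r _ _).
rewrite /plant /vadd /mvmul.
apply: Rle_trans (Rabs_triang _ _) _.
have e1 := Hf j z (k th z) hzf hkf.
have e2 : Rabs (rsum (fun c => g z (k th z) j c * theta c)) <= Lg * (vnorm z + vnorm (k th z)) * Th.
  apply: Rle_trans (rsum_abs _) _; rewrite /Th -rsum_scal; apply: rsum_le => c.
  rewrite Rabs_mult; apply: Rmult_le_compat_r; first exact: Rabs_pos.
  exact: Hg.
have : vnorm z + vnorm (k th z) <= (1 + Lk) * vnorm z by lra.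
move=> h3.
have : Lf * (vnorm z + vnorm (k th z)) <= Lf * ((1 + Lk) * vnorm z) by apply: Rmult_le_compat_l.
have : Lg * (vnorm z + vnorm (k th z)) * Th <= Lg * ((1 + Lk) * vnorm z) * Th.
  apply: Rmult_le_compat_r => //; apply: Rmult_le_compat_l => //.
nra.
Qed.


Lemma is_derive_rsum {p} (F : 'I_p -> R -> R) (D : 'I_p -> R) t :
  (forall j, is_derive (F j) t (D j)) -> is_derive (fun s => rsum (fun j => F j s)) t (rsum D).
Proof.
elim: p F D => [|p IH] F D H.
  rewrite /rsum big_ord0; apply: (is_derive_ext (fun _ => 0)); first by move=> s; rewrite big_ord0.
  exact: (is_derive_const 0 t).
rewrite /rsum big_ord_recr /=.
apply: (is_derive_ext (fun s => rsum (fun j : 'I_p => F (widen_ord (leqnSn p) j) s) + F ord_max s)).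
  move=> s; by rewrite /rsum big_ord_recr.
apply: (is_derive_plus (fun s => rsum (fun j : 'I_p => F (widen_ord (leqnSn p) j) s)) (F ord_max)).
- apply: (IH (fun j => F (widen_ord (leqnSn p) j)) (fun j => D (widen_ord (leqnSn p) j))) => j; exact: H.
- exact: H.
Qed.

Lemma rcont_of_cont D phi : (forall t, continuous phi t) -> rcont D phi.
Proof.
move=> H t _ eps he; case: (cont_pt_elim phi t (H t) eps he) => d [hd Hd].
exists d; split => // s _; exact: Hd.
Qed.

Lemma vnorm_vsub_sym {p} (a b : vec p) : vnorm (vsub a b) = vnorm (vsub b a).
Proof. rewrite /vnorm; f_equal; apply: rsum_ext => i; rewrite /vsub; ring. Qed.

Lemma sumsq_eq0 {p} (z : vec p) : rsum (fun j => z j ^ 2) = 0 -> z = vzero.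
Proof. move=> h; apply: vnorm_eq0; rewrite /vnorm h sqrt_0 //. Qed.

Lemma clamp_deriv a b (phi : R -> R) t l : a < t < b -> is_derive phi t l ->
  is_derive (fun s => phi (clamp a b s)) t l.
Proof.
move=> ht hd; apply: is_derive_ext_loc hd.
exists (mkposreal _ (Rmin_pos _ _ (Rlt_Rminus _ _ (proj1 ht)) (Rlt_Rminus _ _ (proj2 ht)))).
move=> s /= hs; rewrite clamp_id //.
move: hs; rewrite /ball /= /AbsRing_ball /abs /minus /plus /opp /=.
move=> hs; have h1 := Rmin_l (t - a) (b - t); have h2 := Rmin_r (t - a) (b - t).
split_Rabs; lra.
Qed.

Lemma zero_unique {n} (x : R -> vec n) (Fd : vec n -> vec n) a b d L :
  a <= b -> cont_on (fun t => a <= t <= b) x ->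
  (forall t, a < t < b -> vderiv x t (Fd (x t))) ->
  0 < d -> 0 <= L -> (forall z, vnorm z < d -> forall j, Rabs (Fd z j) <= L * vnorm z) ->
  x a = vzero -> forall t, a <= t <= b -> x t = vzero.
Proof.
move=> hab hc hd hd0 hL hF hxa.
set D := fun t => a <= t <= b.
set K := 2 * INR n * L.
have hK : 0 <= K by rewrite /K; have := pos_INR n; nra.
set w := fun t => rsum (fun j => x t j ^ 2).
set dw := fun t => rsum (fun j => 2 * x t j * Fd (x t) j).
set h := fun t => w t * exp (- K * t).
set dh := fun t => dw t * exp (- K * t) + w t * (- K * exp (- K * t)).
have hw_cont : rcont D w.
  apply: rcont_rsum => j; rewrite /= ; apply: (rcont_mult D (fun r => x r j) (fun r => x r j * 1)).
  - exact: cont_on_coord.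
  - apply: (rcont_mult D (fun r => x r j) (fun _ => 1)); [exact: cont_on_coord| exact: rcont_const].
have hexp_d : forall t, is_derive (fun t => exp (- K * t)) t (- K * exp (- K * t)).
  move=> t; have := is_derive_comp exp (fun t => - K * t) t (exp (- K * t)) (- K).
  rewrite /scal /= /mult /=; apply; first exact: is_derive_exp.
  have := is_derive_scal (fun t => t) t (- K) 1 (is_derive_id t); by rewrite Rmult_1_r.
have hh_cont : rcont D h.
  apply: rcont_mult => //; apply: rcont_of_cont => t; apply: ex_derive_continuous.
  eexists; exact: hexp_d.
have hh_der : forall t, a < t < b -> is_derive h t (dh t).
  move=> t ht; rewrite /h /dh.
  have hw : is_derive w t (dw t).
    rewrite /w /dw; apply: is_derive_rsum => j.
    have H := is_derive_pow (fun s => x s j) 2 t (Fd (x t) j) (hd t ht j).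
    rewrite (_ : 2 * x t j * Fd (x t) j = INR 2 * Fd (x t) j * x t j ^ Init.Nat.pred 2); first exact: H.
    rewrite /=; ring.
  have := is_derive_mult w (fun t => exp (- K * t)) t (dw t) (- K * exp (- K * t)) hw (hexp_d t) Rmult_comm.
  rewrite /plus /mult /= => H; exact: H.
have hdh_le : forall t, D t -> vnorm (x t) < d -> dh t <= 0.
  move=> t ht hn; rewrite /dh.
  have hwv : w t = vnorm (x t) ^ 2 by rewrite vnorm_sq.
  have hdw : dw t <= K * w t.
    rewrite /dw hwv /K.
    apply: Rle_trans (rsum_le_const _ (2 * L * vnorm (x t) ^ 2) _) _.
    - move=> j; have := hF (x t) hn j; have := coord_le_vnorm (x t) j.
      have := Rabs_pos (x t j); have := vnorm_ge0 (x t).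
      move=> h1 h2 h3 h4.
      have : x t j * Fd (x t) j <= Rabs (x t j) * Rabs (Fd (x t) j).
        rewrite -Rabs_mult; exact: Rle_abs.
      have : Rabs (x t j) * Rabs (Fd (x t) j) <= vnorm (x t) * (L * vnorm (x t)).
        apply: Rmult_le_compat => //; exact: Rabs_pos.
      nra.
    - lra.
  have := exp_pos (- K * t); nra.
set E := fun s => a <= s <= b /\ forall r, a <= r <= s -> x r = vzero.
have hE : bound E by exists b => s [hh _]; lra.
have hEa : exists s, E s by exists a; split; [lra| move=> r hr; have -> : r = a by lra; done].
case: (completeness E hE hEa) => s0 [hub hlub].
have ha0 : a <= s0 by apply: hub; case: hEa => s hs; split; [lra| move=> r hr; have -> : r = a by lra; done].
have hs0b : s0 <= b by apply: hlub => s [hs _]; lra.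
have Hbelow : forall r, a <= r < s0 -> x r = vzero.
  move=> r hr; apply: NNPP => hne.
  have : s0 <= r; last lra.
  apply: hlub => s [hs Hs]; apply: Rnot_lt_le => hrs; apply: hne; apply: Hs; lra.
have Hs0 : x s0 = vzero.
  case: (Req_dec s0 a) => [->|hne] //.
  apply: NNPP => hx.
  have hpos := vnorm_pos _ hx.
  case: (hc s0 (conj ha0 hs0b) _ hpos) => e [he He].
  set r := Rmax a (s0 - e / 2).
  have hr1 : a <= r by exact: Rmax_l.
  have hr2 : r < s0 by apply: Rmax_lub_lt; lra.
  have := He r (conj hr1 (Rlt_le _ _ (Rlt_le_trans _ _ _ hr2 hs0b))).
  rewrite Hbelow; last lra.
  rewrite vnorm_vsub_sym vsub_vzero => h'.
  have : Rabs (r - s0) < e.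
    rewrite Rabs_left; last lra.
    have : s0 - e / 2 <= r by exact: Rmax_r.
    lra.
  move/h'; lra.
have HE0 : E s0 by split; [lra| move=> r hr; case: (Req_dec r s0) => [->|hne] //; apply: Hbelow; lra].
case: (Req_dec s0 b) => [eb|hlt].
  move=> t ht; case: (Req_dec t s0) => [->|hne] //; apply: Hbelow; lra.
exfalso.
have hs0b' : s0 < b by lra.
case: (hc s0 (conj ha0 hs0b) d hd0) => e [he He].
set t2 := Rmin (s0 + e / 2) b.
have ht2 : s0 < t2 by apply: Rmin_glb_lt; lra.
have ht2b : t2 <= b by exact: Rmin_r.
have ht2e : t2 <= s0 + e / 2 by exact: Rmin_l.
have Hsmall : forall r, s0 <= r <= t2 -> vnorm (x r) < d.
  move=> r hr; have := He r ltac:(split; lra) ltac:(rewrite Rabs_pos_eq; lra).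
  by rewrite Hs0 vsub_vzero.
have Hzero : forall t, s0 < t <= t2 -> x t = vzero.
  move=> t ht.
  have hcl : forall r, continuity_pt (fun s => h (clamp s0 t s)) r.
    move=> r; apply/continuity_pt_filterlim; apply: rcont_clamp; first lra.
    apply: rcont_sub hh_cont => s hs; rewrite /D; lra.
  case: (MVT_gen (fun s => h (clamp s0 t s)) s0 t dh) => [r hr|r hr|c [hc1 hc2]].
  - rewrite Rmin_left in hr; last lra. rewrite Rmax_right in hr; last lra.
    apply: clamp_deriv => //; apply: hh_der; lra.
  - exact: hcl.
  rewrite Rmin_left in hc1; last lra. rewrite Rmax_right in hc1; last lra.
  rewrite !clamp_id in hc2; try lra.
  have hdc : dh c <= 0 by apply: hdh_le; [rewrite /D; lra| apply: Hsmall; lra].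
  have hh0 : h s0 = 0 by rewrite /h /w Hs0 /vzero (rsum_ext _ (fun _ => 0)) ?rsum0; [ring| move=> j; ring].
  have hht : h t <= 0 by rewrite hh0 in hc2; nra.
  have hwt : w t <= 0 by have := exp_pos (- K * t); rewrite /h in hht; nra.
  apply: sumsq_eq0; have := sumsq_ge0 (x t); rewrite /w in hwt; lra.
have : t2 <= s0.
  apply: hub; split; [lra| move=> r hr].
  case: (Rle_or_lt r s0) => hr'.
  - case: HE0 => _ H; apply: H; lra.
  - apply: Hzero; lra.
lra.
Qed.

Lemma rlim_elim (phi : R -> R) l : filterlim phi (at_right 0) (locally l) ->
  forall eps, 0 < eps -> exists d, 0 < d /\ forall h, 0 < h < d -> Rabs (phi h - l) < eps.
Proof.
move=> H eps he.
case: (H (ball l (mkposreal eps he)) (locally_ball l (mkposreal eps he))) => d Hd.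
exists d; split; first exact: cond_pos.
move=> h hh; have := Hd h; rewrite /ball /= /AbsRing_ball /abs /minus /plus /opp /=.
apply; last lra.
rewrite Ropp_0 Rplus_0_r Rabs_pos_eq; lra.
Qed.

Lemma glue_deriv (phi F : R -> R) t0 t1 v : t1 < t0 ->
  rcont (fun r => t1 <= r <= t0) phi -> (forall r, t1 < r < t0 -> is_derive phi r (F r)) ->
  rcont (fun r => t1 <= r <= t0) F -> F t0 = v ->
  filterlim (fun h => (phi (t0 + h) - phi t0) / h) (at_right 0) (locally v) -> is_derive phi t0 v.
Proof.
move=> h10 hpc hd hFc hFv hr.
apply/is_derive_Reals => eps he.
case: (rlim_elim _ _ hr eps he) => d1 [hd1 H1].
case: (hFc t0 ltac:(lra) eps he) => d3 [hd3 H3].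
have hdd : 0 < Rmin d1 (Rmin d3 (t0 - t1)) by apply: Rmin_glb_lt => //; apply: Rmin_glb_lt; lra.
exists (mkposreal _ hdd) => h hh /= hab.
have m1 := Rmin_l d1 (Rmin d3 (t0 - t1)). have m2 := Rmin_r d1 (Rmin d3 (t0 - t1)).
have m3 := Rmin_l d3 (t0 - t1). have m4 := Rmin_r d3 (t0 - t1).
case: (Rlt_or_le 0 h) => hpos.
  apply: H1; split => //; move: hab; rewrite Rabs_pos_eq; lra.
have hneg : h < 0 by lra.
have habs : Rabs h = - h by rewrite Rabs_left.
rewrite habs in hab.
set s := t0 + h.
have hs1 : t1 < s < t0 by rewrite /s; lra.
have hcl : forall r, continuity_pt (fun z => phi (clamp s t0 z)) r.
  move=> r; apply/continuity_pt_filterlim; apply: rcont_clamp; first lra.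
  apply: rcont_sub hpc => z hz; lra.
case: (MVT_gen (fun z => phi (clamp s t0 z)) s t0 F) => [r hr0|r hr0|c [hc e]].
- rewrite Rmin_left in hr0; last lra. rewrite Rmax_right in hr0; last lra.
  apply: clamp_deriv => //; apply: hd; lra.
- exact: hcl.
rewrite Rmin_left in hc; last lra. rewrite Rmax_right in hc; last lra.
rewrite !clamp_id in e; try lra.
have -> : (phi (t0 + h) - phi t0) / h = F c.
  rewrite -/s; have : phi s - phi t0 = F c * h by rewrite /s in e *; lra.
  move=> ->; field; lra.
rewrite -hFv; apply: H3; first lra.
rewrite /s in hc; split_Rabs; lra.
Qed.


Lemma is_RInt_rsum {p} (F : 'I_p -> R -> R) (I : 'I_p -> R) a b :
  (forall j, is_RInt (F j) a b (I j)) -> is_RInt (fun s => rsum (fun j => F j s)) a b (rsum I).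
Proof.
elim: p F I => [|p IH] F I H.
  rewrite /rsum big_ord0; apply: (is_RInt_ext (fun _ => 0)); first by move=> s _; rewrite big_ord0.
  have := is_RInt_const a b 0; by rewrite /scal /= /mult /= Rmult_0_r.
rewrite /rsum big_ord_recr /=.
apply: (is_RInt_ext (fun s => rsum (fun j : 'I_p => F (widen_ord (leqnSn p) j) s) + F ord_max s)).
  move=> s _; by rewrite /rsum big_ord_recr.
apply: (is_RInt_plus (fun s => rsum (fun j : 'I_p => F (widen_ord (leqnSn p) j) s)) (F ord_max)).
- apply: (IH (fun j => F (widen_ord (leqnSn p) j)) (fun j => I (widen_ord (leqnSn p) j))) => j; exact: H.
- exact: H.
Qed.

Lemma RInt_rsum {p} (F : 'I_p -> R -> R) a b :
  (forall j, ex_RInt (F j) a b) -> RInt (fun s => rsum (fun j => F j s)) a b = rsum (fun j => RInt (F j) a b).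
Proof. move=> H; apply: is_RInt_unique; apply: is_RInt_rsum => j; exact: RInt_correct. Qed.

Lemma ex_RInt_cont (f : R -> R) a b : (forall t, continuous f t) -> ex_RInt f a b.
Proof. move=> H; apply: ex_RInt_continuous => z _; exact: H. Qed.

Lemma cont_mult (f g : R -> R) t : continuous f t -> continuous g t -> continuous (fun s => f s * g s) t.
Proof. move=> h1 h2; exact: (continuous_mult f g t h1 h2). Qed.

Section Dbl.
Variables (A B : R -> R) (al be : R).
Hypothesis hA : forall t, continuous A t.
Hypothesis hB : forall t, continuous B t.
Let IA := RInt A al be.
Let IB := RInt B al be.
Let IAB := RInt (fun s => A s * B s) al be.
Let L := be - al.

Lemma inner_is t : is_RInt (fun s => (A t - A s) * (B t - B s)) al be
   (A t * B t * L - A t * IB - B t * IA + IAB).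
Proof.
have hAB : ex_RInt (fun s => A s * B s) al be by apply: ex_RInt_cont => s; exact: cont_mult.
have h1 := is_RInt_const al be (A t * B t).
have h2 := is_RInt_scal B al be (A t) _ (RInt_correct _ _ _ (ex_RInt_cont B al be hB)).
have h3 := is_RInt_scal A al be (B t) _ (RInt_correct _ _ _ (ex_RInt_cont A al be hA)).
have h4 := RInt_correct _ _ _ hAB.
have := is_RInt_plus _ _ _ _ _ _ (is_RInt_minus _ _ _ _ _ _ (is_RInt_minus _ _ _ _ _ _ h1 h2) h3) h4.
rewrite /scal /= /mult /= /minus /plus /opp /= => H.
apply: is_RInt_ext (_ : is_RInt _ _ _ _) => [s _|]; last first.
  rewrite (_ : A t * B t * L - A t * IB - B t * IA + IAB =
     (be - al) * (A t * B t) + - (A t * RInt B al be) + - (B t * RInt A al be) + RInt (fun s => A s * B s) al be); first exact: H.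
  rewrite /L /IA /IB /IAB; ring.
rewrite /=; ring.
Qed.

Lemma inner_eq t : RInt (fun s => (A t - A s) * (B t - B s)) al be =
   A t * B t * L - A t * IB - B t * IA + IAB.
Proof. apply: is_RInt_unique; exact: inner_is. Qed.

Lemma outer_is : is_RInt (fun t => A t * B t * L - A t * IB - B t * IA + IAB) al be
   (2 * (L * IAB - IA * IB)).
Proof.
have hAB : ex_RInt (fun s => A s * B s) al be by apply: ex_RInt_cont => s; exact: cont_mult.
have h1 := is_RInt_scal _ al be L _ (RInt_correct _ _ _ hAB).
have h2 := is_RInt_scal A al be IB _ (RInt_correct _ _ _ (ex_RInt_cont A al be hA)).
have h3 := is_RInt_scal B al be IA _ (RInt_correct _ _ _ (ex_RInt_cont B al be hB)).
have h4 := is_RInt_const al be IAB.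
have := is_RInt_plus _ _ _ _ _ _ (is_RInt_minus _ _ _ _ _ _ (is_RInt_minus _ _ _ _ _ _ h1 h2) h3) h4.
rewrite /scal /= /mult /= /minus /plus /opp /= => H.
apply: is_RInt_ext (_ : is_RInt _ _ _ _) => [s _|]; last first.
  rewrite (_ : 2 * (L * IAB - IA * IB) =
     L * RInt (fun s => A s * B s) al be + - (IB * RInt A al be) + - (IA * RInt B al be) + (be - al) * IAB); first exact: H.
  rewrite /L /IA /IB /IAB; ring.
rewrite /=; ring.
Qed.
End Dbl.

Definition Bv (A B : R -> R) al be :=
  2 * ((be - al) * RInt (fun s => A s * B s) al be - RInt A al be * RInt B al be).

Lemma dbl_sum {p} (A B : 'I_p -> R -> R) al be :
  (forall j t, continuous (A j) t) -> (forall j t, continuous (B j) t) ->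
  RInt (fun t => RInt (fun s => rsum (fun j => (A j t - A j s) * (B j t - B j s))) al be) al be
  = rsum (fun j => Bv (A j) (B j) al be).
Proof.
move=> hA hB.
rewrite (RInt_ext _ (fun t => rsum (fun j => A j t * B j t * (be - al) - A j t * RInt (B j) al be
     - B j t * RInt (A j) al be + RInt (fun s => A j s * B j s) al be))).
  apply: is_RInt_unique; apply: is_RInt_rsum => j; rewrite /Bv; exact: outer_is.
move=> t _; apply: is_RInt_unique; apply: is_RInt_rsum => j; exact: inner_is.
Qed.

Lemma cont_nonneg_zero (f : R -> R) al be : al < be -> (forall t, continuous f t) ->
  (forall t, 0 <= f t) -> RInt f al be = 0 -> forall t, al <= t <= be -> f t = 0.
Proof.
move=> hab hc hp hI t0 ht0; case: (hp t0) => // hpos; exfalso.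
case: (cont_pt_elim f t0 (hc t0) (f t0 / 2) ltac:(lra)) => d [hd Hd].
set c1 := Rmax al (t0 - d / 2); set c2 := Rmin be (t0 + d / 2).
have h1 : al <= c1 by exact: Rmax_l.
have h2 : c2 <= be by exact: Rmin_l.
have h12 : c1 < c2 by rewrite /c1 /c2; apply: Rmax_lub_lt; apply: Rmin_glb_lt; lra.
have hex : forall a b, ex_RInt f a b by move=> a b; exact: ex_RInt_cont.
have e : RInt f al be = RInt f al c1 + (RInt f c1 c2 + RInt f c2 be).
  rewrite -(RInt_Chasles f al c1 be) // -(RInt_Chasles f c1 c2 be) //.
have g1 : 0 <= RInt f al c1 by apply: RInt_ge_0 => // s _; exact: hp.
have g3 : 0 <= RInt f c2 be by apply: RInt_ge_0 => // s _; exact: hp.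
have g2 : (c2 - c1) * (f t0 / 2) <= RInt f c1 c2.
  have := RInt_le (fun _ => f t0 / 2) f c1 c2 (Rlt_le _ _ h12) (ex_RInt_const _ _ _) (hex _ _).
  rewrite RInt_const /scal /= /mult /=; apply => s hs.
  have : Rabs (s - t0) < d.
    have : t0 - d / 2 <= c1 by exact: Rmax_r.
    have : c2 <= t0 + d / 2 by exact: Rmin_r.
    move=> *; split_Rabs; lra.
  move/Hd; split_Rabs; lra.
have : 0 < (c2 - c1) * (f t0 / 2) by apply: Rmult_lt_0_compat; lra.
lra.
Qed.

Lemma Bv_sym A B al be : Bv A B al be = Bv B A al be.
Proof. rewrite /Bv (RInt_ext (fun s => A s * B s) (fun s => B s * A s)); first ring. move=> s _; exact: Rmult_comm. Qed.

Lemma Bv_lin_r {p} (A : R -> R) (Bc : 'I_p -> R -> R) (th : 'I_p -> R) al be :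
  (forall t, continuous A t) -> (forall c t, continuous (Bc c) t) ->
  Bv A (fun s => rsum (fun c => th c * Bc c s)) al be = rsum (fun c => th c * Bv A (Bc c) al be).
Proof.
move=> hA hB; rewrite /Bv.
rewrite (RInt_ext (fun s => A s * rsum (fun c => th c * Bc c s)) (fun s => rsum (fun c => th c * (A s * Bc c s)))); last first.
  move=> s _; rewrite -rsum_scal; apply: rsum_ext => c; ring.
rewrite !RInt_rsum.
- rewrite (rsum_ext (fun j => RInt (fun s => th j * (A s * Bc j s)) al be) (fun j => th j * RInt (fun s => A s * Bc j s) al be)); last first.
    move=> j; have := RInt_scal (fun s => A s * Bc j s) al be (th j); rewrite /scal /= /mult /=; apply.
    apply: ex_RInt_cont => s; exact: cont_mult.
  rewrite (rsum_ext (fun j => RInt (fun s => th j * Bc j s) al be) (fun j => th j * RInt (Bc j) al be)); last first.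
    move=> j; have := RInt_scal (Bc j) al be (th j); rewrite /scal /= /mult /=; apply.
    apply: ex_RInt_cont => s; exact: hB.
  rewrite [RHS](rsum_ext _ (fun c => 2 * ((be - al) * (th c * RInt (fun s => A s * Bc c s) al be) - RInt A al be * (th c * RInt (Bc c) al be)))); last by move=> c; ring.
  by rewrite rsum_scal rsum_minus !rsum_scal.
- move=> j; apply: ex_RInt_cont => s; apply: (cont_mult (fun _ => th j)); [exact: continuous_const| exact: hB].
- move=> j; apply: ex_RInt_cont => s; apply: (cont_mult (fun _ => th j)); [exact: continuous_const| exact: cont_mult].
Qed.

Lemma Bv_self A al be : al < be -> (forall t, continuous A t) ->
  0 <= Bv A A al be /\ (Bv A A al be = 0 -> forall t, al <= t <= be -> A t = A al).
Proof.
move=> hab hA.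
set L := be - al; set m := RInt A al be / L.
have hL : 0 < L by rewrite /L; lra.
set f := fun s => (A s - m) ^ 2.
have hfc : forall t, continuous f t.
  move=> t; rewrite /f /=; apply: (cont_mult (fun s => A s - m) (fun s => (A s - m) * 1)).
  - apply: (continuous_minus A (fun _ => m)) => //; exact: continuous_const.
  - apply: (cont_mult (fun s => A s - m) (fun _ => 1)); last exact: continuous_const.
    apply: (continuous_minus A (fun _ => m)) => //; exact: continuous_const.
have hAA : ex_RInt (fun s => A s * A s) al be by apply: ex_RInt_cont => s; exact: cont_mult.
have hexA : ex_RInt A al be by exact: ex_RInt_cont.
have eI : RInt f al be = RInt (fun s => A s * A s) al be - 2 * m * RInt A al be + m ^ 2 * L.
  rewrite /f (RInt_ext _ (fun s => plus (plus (A s * A s) (scal (- 2 * m) (A s))) (m ^ 2))); last first.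
    move=> s _; rewrite /plus /scal /= /mult /=; ring.
  rewrite RInt_plus; [|apply: ex_RInt_plus => //; exact: ex_RInt_scal| exact: ex_RInt_const].
  rewrite RInt_plus //; last exact: ex_RInt_scal.
  rewrite RInt_scal // RInt_const /plus /scal /= /mult /= /L; ring.
have eB : Bv A A al be = 2 * L * RInt f al be.
  rewrite eI /Bv /m -/L; field; lra.
have hf0 : 0 <= RInt f al be by apply: RInt_ge_0; [lra| exact: ex_RInt_cont| move=> s _; rewrite /f /=; exact: pow2_ge_0].
split; first by rewrite eB; nra.
move=> h0 t ht.
have hz : RInt f al be = 0 by rewrite eB in h0; nra.
have := cont_nonneg_zero f al be hab hfc (fun s => ltac:(rewrite /f /=; exact: pow2_ge_0)) hz.
move=> H; have := H t ht; have := H al ltac:(lra); rewrite /f => e1 e2.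
have : A t - m = 0 by nra. have : A al - m = 0 by nra. lra.
Qed.


Definition ccont {n m} (Psi : vec n -> vec m -> R) := forall D (y : R -> vec n) (v : R -> vec m),
  cont_on D y -> cont_on D v -> rcont D (fun r => Psi (y r) (v r)).

Lemma ccont_of_vcont2 {n m} (Psi : vec n -> vec m -> R) : vcont2 Psi -> ccont Psi.
Proof. move=> h D y v hy hv; exact: cont_on_comp2. Qed.

Lemma ccont_plant {n m l} (f : vec n -> vec m -> vec n) (g : vec n -> vec m -> mat n l) theta j :
  (forall j, smooth2 (fun x u => f x u j)) -> (forall j c, smooth2 (fun x u => g x u j c)) ->
  ccont (fun z w => plant f g z w theta j).
Proof.
move=> hf hg D y v hy hv; rewrite /plant /vadd /mvmul.
apply: rcont_plus; first exact: (cont_on_comp2 (fun x u => f x u j) D y v ((hf j nil).1)).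
apply: rcont_rsum => c; apply: rcont_mult; last exact: rcont_const.
exact: (cont_on_comp2 (fun x u => g x u j c) D y v ((hg j c nil).1)).
Qed.

Lemma cont_on_k {n m l} (k : vec l -> vec n -> vec m) th D (y : R -> vec n) :
  (forall j, smooth2 (fun th x => k th x j)) -> cont_on D y -> cont_on D (fun r => k th (y r)).
Proof.
move=> hk hy; apply: cont_on_vec => j.
exact: (cont_on_comp2 (fun th x => k th x j) D (fun _ => th) y ((hk j nil).1) (cont_on_const D th) hy).
Qed.

Lemma cont_of_rcontT phi : rcont (fun _ => True) phi -> forall t, continuous phi t.
Proof.
move=> H t; apply: cont_pt_intro => eps he; case: (H t I eps he) => d [hd Hd].
exists d; split => // y hy; exact: Hd.
Qed.

Section Hyb.
Variables (n m l : nat).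
Variables (f : vec n -> vec m -> vec n) (g : vec n -> vec m -> mat n l)
  (k : vec l -> vec n -> vec m) (V Q : vec l -> vec n -> R).
Hypothesis hf : forall j, smooth2 (fun x u => f x u j).
Hypothesis hg : forall j c, smooth2 (fun x u => g x u j c).
Hypothesis hk : forall j, smooth2 (fun th x => k th x j).
Hypothesis hf0 : f vzero vzero = vzero.
Hypothesis hg0 : g vzero vzero = mzero.
Hypothesis hk0 : forall th, k th vzero = vzero.
Hypothesis hVc : vcont2 V.
Hypothesis hQc : vcont2 Q.
Hypothesis hVQ : forall th z, V th z <= Q th z.
Variables (T : R) (Ntil : nat) (a : vec n -> R).
Hypothesis hT : 0 < T.
Hypothesis hapd : posdef a.
Variables (theta : vec l) (x : R -> vec n) (u : R -> vec m) (th : R -> vec l) (tau : nat -> R).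
Hypothesis hyb : hybrid_sol f g k V Q a T Ntil theta x u th tau.

Definition thh i := th (tau i).

Lemma tau0 : tau 0%nat = 0. Proof. by case: hyb. Qed.
Lemma hcover : forall t, 0 <= t -> exists i, tau i <= t < tau i.+1. Proof. by case: hyb => _ []. Qed.
Lemma hxc : cont_on (fun t => 0 <= t) x. Proof. by case: hyb => _ [_ []]. Qed.
Lemma hI i : (forall t, tau i <= t < tau i.+1 -> u t = k (thh i) (x t) /\ th t = thh i) /\
    vrderiv x (tau i) (plant f g (x (tau i)) (k (thh i) (x (tau i))) theta) /\
    (forall t, tau i < t < tau i.+1 -> vderiv x t (plant f g (x t) (u t) theta)) /\
    (x (tau i) = vzero -> tau i.+1 = tau i + T) /\
    (x (tau i) <> vzero ->
       Rbar.Finite (tau i.+1) = Rbar_min (Rbar.Finite (tau i + T))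
         (Glb_Rbar (fun t => tau i < t /\
            V (thh i) (x t) = Q (thh i) (x (tau i)) + a (x (tau i))))) /\
    (forall mu, is_min (mu_set tau T Ntil i) mu ->
       mvmul (Gmat g x u mu (tau i.+1)) (thh i.+1) = Zvec f g x u mu (tau i.+1) /\
       forall v : vec l, mvmul (Gmat g x u mu (tau i.+1)) v = Zvec f g x u mu (tau i.+1) ->
         vnorm (vsub (thh i.+1) (thh i)) <= vnorm (vsub v (thh i))).
Proof. by case: hyb => _ [_ [_ H]]; exact: H. Qed.

Lemma glb_facts (S : R -> Prop) t0 t1 :
  Rbar.Finite t1 = Rbar_min (Rbar.Finite t0) (Glb_Rbar S) ->
  t1 <= t0 /\ (forall s, S s -> t1 <= s) /\ (forall b, (forall s, S s -> b <= s) -> Rmin t0 b <= t1).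
Proof.
have [hlb hglb] := Glb_Rbar_correct S.
case E: (Glb_Rbar S) hlb hglb => [r| |] hlb hglb /= e.
- case: e => ->; split; first exact: Rmin_l.
  split; first by move=> s hs; apply: Rle_trans (Rmin_r _ _) _; exact: (hlb s hs).
  move=> b hb; have := hglb (Rbar.Finite b) hb; rewrite /= => h.
  rewrite /Rmin; case: Rle_dec; case: Rle_dec => *; lra.
- case: e => ->; split; first lra.
  split; first by move=> s hs; have := hlb s hs.
  move=> b _; exact: Rmin_l.
- discriminate.
Qed.

Lemma tau_step i : tau i <= tau i.+1 <= tau i + T.
Proof.
have [_ [_ [_ [hz [hnz _]]]]] := hI i.
case: (classic (x (tau i) = vzero)) => h; first by rewrite hz //; lra.
have [h1 [h2 h3]] := glb_facts _ _ _ (hnz h); split => //.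
have := h3 (tau i) (fun s hs => Rlt_le _ _ (proj1 hs)).
rewrite Rmin_right; lra.
Qed.

Lemma tau_mono i j : (i <= j)%nat -> tau i <= tau j.
Proof.
move=> hij; rewrite -(subnKC hij); elim: (j - i)%nat => [|d IH]; first by rewrite addn0; lra.
rewrite addnS; have := tau_step (i + d); lra.
Qed.
Lemma tau_ge0 i : 0 <= tau i.
Proof. rewrite -tau0; apply: tau_mono; exact: leq0n. Qed.
Lemma tau_le i : tau i <= INR i * T.
Proof.
elim: i => [|i IH]; first by rewrite tau0 /=; lra.
have := tau_step i; rewrite S_INR; lra.
Qed.

Lemma rcont_Vx ϑ : rcont (fun t => 0 <= t) (fun r => V ϑ (x r)).
Proof. exact: (cont_on_comp2 V _ (fun _ => ϑ) x hVc (cont_on_const _ ϑ) hxc). Qed.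

Lemma trigger i : x (tau i) <> vzero ->
  forall t, tau i <= t <= tau i.+1 -> V (thh i) (x t) <= Q (thh i) (x (tau i)) + a (x (tau i)).
Proof.
move=> hx t ht.
have [_ [_ [_ [_ [hnz _]]]]] := hI i.
have [h1 [h2 h3]] := glb_facts _ _ _ (hnz hx).
set c := Q (thh i) (x (tau i)) + a (x (tau i)).
have hc : V (thh i) (x (tau i)) < c.
  rewrite /c; have := hVQ (thh i) (x (tau i)); have := (proj2 hapd) _ hx; lra.
apply: Rnot_lt_le => hlt.
have ht0 : tau i < t by case: (Req_dec t (tau i)) => [e|ne]; [rewrite e in hlt; lra| lra].
set phi := fun r => V (thh i) (x (clamp (tau i) t r)) - c.
have hphi : continuity phi.
  move=> r; apply/continuity_pt_filterlim.
  apply: (continuous_minus (fun r => V (thh i) (x (clamp (tau i) t r))) (fun _ => c)); last exact: continuous_const.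
  apply: (rcont_clamp (tau i) t (fun z => V (thh i) (x z))); first lra.
  apply: rcont_sub (rcont_Vx (thh i)) => s hs; have := tau_ge0 i; lra.
case: (IVT_gen phi (tau i) t 0 hphi).
  rewrite /phi !clamp_id; try lra.
  unfold Rmin, Rmax; repeat destruct Rle_dec; lra.
move=> s [hs e].
rewrite Rmin_left in hs; last lra. rewrite Rmax_right in hs; last lra.
move: e; rewrite /phi clamp_id // => e.
have hs1 : tau i < s.
  case: (Req_dec s (tau i)) => [es|ne]; last lra.
  rewrite es in e; lra.
have : tau i.+1 <= s by apply: h2; split => //; rewrite -/c; lra.
case: (Req_dec s t) => [est|nst]; first by rewrite est in e; lra.
lra.
Qed.

Lemma tau_strict i : tau i < tau i.+1.
Proof.
have [_ [_ [_ [hz [hnz _]]]]] := hI i.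
case: (classic (x (tau i) = vzero)) => hx; first by rewrite hz //; lra.
have [h1 [h2 h3]] := glb_facts _ _ _ (hnz hx).
set c := Q (thh i) (x (tau i)) + a (x (tau i)).
have hc : V (thh i) (x (tau i)) < c.
  rewrite /c; have := hVQ (thh i) (x (tau i)); have := (proj2 hapd) _ hx; lra.
case: (rcont_Vx (thh i) (tau i) (tau_ge0 i) (c - V (thh i) (x (tau i))) ltac:(lra)) => d [hd Hd].
have hlb : forall s, (tau i < s /\ V (thh i) (x s) = c) -> tau i + d <= s.
  move=> s [hs e]; apply: Rnot_lt_le => hlt.
  have := Hd s ltac:(have := tau_ge0 i; lra) ltac:(rewrite Rabs_pos_eq; lra).
  rewrite e; move=> h; have := Rle_abs (c - V (thh i) (x (tau i))); lra.
have := h3 _ hlb; rewrite /Rmin; case: Rle_dec => *; lra.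
Qed.

Lemma piece_ge i t : tau i <= t -> exists j, (i <= j)%nat /\ tau j <= t < tau j.+1.
Proof.
move=> ht; case: (hcover t (Rle_trans _ _ _ (tau_ge0 i) ht)) => j hj.
exists j; split => //; case: (leqP i j) => // hji.
have := tau_mono j.+1 i hji; lra.
Qed.

Lemma cont_on_sub {p} D D' (y : R -> vec p) : (forall t, D' t -> D t) -> cont_on D y -> cont_on D' y.
Proof.
move=> hD H t ht eps he; case: (H t (hD t ht) eps he) => d [hd Hd]; exists d; split => //.
move=> s hs; exact: Hd (hD s hs).
Qed.

Lemma hxc_piece i : cont_on (fun t => tau i <= t <= tau i.+1) x.
Proof. apply: cont_on_sub hxc => t ht; have := tau_ge0 i; lra. Qed.

Definition pc i r := clamp (tau i) (tau i.+1) r.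
Definition pf (Psi : vec n -> vec m -> R) i r := Psi (x (pc i r)) (k (thh i) (x (pc i r))).

Lemma pf_cont Psi : ccont Psi -> forall i r, continuous (pf Psi i) r.
Proof.
move=> hP i r; apply: (rcont_clamp (tau i) (tau i.+1) (fun z => Psi (x z) (k (thh i) (x z)))).
  by have := tau_step i; lra.
apply: hP; [exact: hxc_piece| apply: cont_on_k => //; exact: hxc_piece].
Qed.

Lemma pf_eq Psi i r : tau i <= r < tau i.+1 -> Psi (x r) (u r) = pf Psi i r.
Proof.
move=> hr; have [hu _] := hI i; rewrite /pf /pc clamp_id; last lra.
by rewrite (proj1 (hu r hr)).
Qed.

Lemma piece_int Psi i s t : ccont Psi -> tau i <= s <= tau i.+1 -> tau i <= t <= tau i.+1 ->
  is_RInt (fun r => Psi (x r) (u r)) s t (RInt (pf Psi i) s t).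
Proof.
move=> hP hs ht; apply: (is_RInt_ext (pf Psi i)).
  move=> r hr; symmetry; apply: pf_eq.
  move: hr; rewrite /Rmin /Rmax; case: Rle_dec => _ hr; lra.
apply: RInt_correct; apply: ex_RInt_cont => r; exact: pf_cont.
Qed.

Lemma ex_int0 Psi t : ccont Psi -> 0 <= t -> ex_RInt (fun r => Psi (x r) (u r)) 0 t.
Proof.
move=> hP ht.
suff H : forall i t, tau i <= t <= tau i.+1 -> ex_RInt (fun r => Psi (x r) (u r)) 0 t.
  case: (hcover t ht) => i hi; apply: (H i); lra.
elim => [|i IH] t' ht'.
  rewrite -tau0; eexists; apply: (piece_int Psi 0) => //; have := tau_step 0; lra.
apply: (ex_RInt_Chasles _ 0 (tau i.+1)).
  apply: IH; have := tau_step i; lra.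
eexists; apply: (piece_int Psi i.+1) => //; have := tau_step i.+1; lra.
Qed.

Lemma ex_int Psi s t : ccont Psi -> 0 <= s -> 0 <= t -> ex_RInt (fun r => Psi (x r) (u r)) s t.
Proof.
move=> hP hs ht; apply: (ex_RInt_Chasles _ s 0); last exact: ex_int0.
apply: ex_RInt_swap; exact: ex_int0.
Qed.

Lemma piecewise_rcont (phi : R -> R) (G : nat -> R -> R) :
  (forall i t, continuous (G i) t) -> (forall i s, tau i <= s <= tau i.+1 -> phi s = G i s) ->
  rcont (fun t => 0 <= t) phi.
Proof.
move=> hG hE t ht eps he.
case: (hcover t ht) => i hi.
have hs := tau_strict i.
case: (cont_pt_elim _ _ (hG i t) eps he) => d1 [hd1 H1].
have et : phi t = G i t by apply: hE; lra.
case: (Rlt_or_le (tau i) t) => hti.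
- exists (Rmin d1 (Rmin (t - tau i) (tau i.+1 - t))); split.
    apply: Rmin_glb_lt => //; apply: Rmin_glb_lt; lra.
  move=> s _ hst.
  have h1 := Rmin_l d1 (Rmin (t - tau i) (tau i.+1 - t)).
  have h2 := Rmin_r d1 (Rmin (t - tau i) (tau i.+1 - t)).
  have h3 := Rmin_l (t - tau i) (tau i.+1 - t).
  have h4 := Rmin_r (t - tau i) (tau i.+1 - t).
  rewrite et (hE i s); last by split_Rabs; lra.
  apply: H1; lra.
- have eti : t = tau i by lra.
  case: i hi hs H1 et hti eti => [|i] hi hs H1 et hti eti.
  + exists (Rmin d1 (tau 1%nat - t)); split; first by apply: Rmin_glb_lt; lra.
    move=> s hs0 hst.
    have h1 := Rmin_l d1 (tau 1%nat - t); have h2 := Rmin_r d1 (tau 1%nat - t).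
    rewrite tau0 in eti.
    rewrite et (hE 0%nat s); last by rewrite tau0; split_Rabs; lra.
    apply: H1; lra.
  + have hs' := tau_strict i.
    case: (cont_pt_elim _ _ (hG i t) eps he) => d2 [hd2 H2].
    have et' : phi t = G i t by apply: hE; lra.
    exists (Rmin (Rmin d1 d2) (Rmin (tau i.+2 - t) (t - tau i))); split.
      apply: Rmin_glb_lt; apply: Rmin_glb_lt; lra.
    move=> s _ hst.
    have h1 := Rmin_l (Rmin d1 d2) (Rmin (tau i.+2 - t) (t - tau i)).
    have h2 := Rmin_r (Rmin d1 d2) (Rmin (tau i.+2 - t) (t - tau i)).
    have h3 := Rmin_l d1 d2. have h4 := Rmin_r d1 d2.
    have h5 := Rmin_l (tau i.+2 - t) (t - tau i). have h6 := Rmin_r (tau i.+2 - t) (t - tau i).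
    case: (Rle_or_lt t s) => hts.
    * rewrite et (hE i.+1 s); last by split_Rabs; lra.
      apply: H1; lra.
    * rewrite et' (hE i s); last by split_Rabs; lra.
      apply: H2; lra.
Qed.

Definition Qf (Psi : vec n -> vec m -> R) (t : R) : R := RInt (fun r => Psi (x r) (u r)) 0 t.
Definition Ipf (Psi : vec n -> vec m -> R) i (t : R) : R := RInt (pf Psi i) (tau i) t.

Lemma Ipf_deriv Psi i t : ccont Psi -> is_derive (Ipf Psi i) t (pf Psi i t).
Proof.
move=> hP; apply: is_derive_RInt; last exact: pf_cont.
apply: filter_forall => b; apply: RInt_correct; apply: ex_RInt_cont => r; exact: pf_cont.
Qed.
Lemma Ipf_cont Psi i t : ccont Psi -> continuous (Ipf Psi i) t.
Proof. move=> hP; apply: ex_derive_continuous; eexists; exact: Ipf_deriv. Qed.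

Lemma Q_piece Psi i t : ccont Psi -> tau i <= t <= tau i.+1 -> Qf Psi t = Qf Psi (tau i) + Ipf Psi i t.
Proof.
move=> hP ht; rewrite /Qf /Ipf.
rewrite -(RInt_Chasles _ 0 (tau i) t); first last.
- eexists; apply: (piece_int Psi i) => //; lra.
- apply: ex_int0 => //; exact: tau_ge0.
congr plus; apply: is_RInt_unique; apply: (piece_int Psi i) => //; lra.
Qed.

Lemma Q_rcont Psi : ccont Psi -> rcont (fun t => 0 <= t) (Qf Psi).
Proof.
move=> hP; apply: (piecewise_rcont _ (fun i t => Qf Psi (tau i) + Ipf Psi i t)).
- move=> i t; apply: (continuous_plus (fun _ => Qf Psi (tau i)) (Ipf Psi i)); first exact: continuous_const.
  exact: Ipf_cont.
- move=> i s hs; exact: Q_piece.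
Qed.

Lemma Q0 Psi : Qf Psi 0 = 0.
Proof. by rewrite /Qf RInt_point. Qed.

Definition plantP j : vec n -> vec m -> R := fun z w => plant f g z w theta j.
Definition fP j : vec n -> vec m -> R := fun z w => f z w j.
Definition gP j c : vec n -> vec m -> R := fun z w => g z w j c.
Lemma cc_plant j : ccont (plantP j). Proof. exact: ccont_plant. Qed.
Lemma cc_f j : ccont (fP j). Proof. apply: ccont_of_vcont2; exact: (hf j nil).1. Qed.
Lemma cc_g j c : ccont (gP j c). Proof. apply: ccont_of_vcont2; exact: (hg j c nil).1. Qed.

Lemma ftc_piece j i t : tau i <= t <= tau i.+1 -> x t j - x (tau i) j = Ipf (plantP j) i t.
Proof.
move=> ht.
set W := fun r => x (pc i r) j - Ipf (plantP j) i r.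
have hW : forall r, continuity_pt W r.
  move=> r; apply/continuity_pt_filterlim.
  apply: (continuous_minus (fun r => x (pc i r) j) (Ipf (plantP j) i)); last exact: Ipf_cont (cc_plant j).
  apply: (rcont_clamp (tau i) (tau i.+1) (fun z => x z j)); first by have := tau_step i; lra.
  apply: cont_on_coord; exact: hxc_piece.
have [_ [_ [hder _]]] := hI i.
case: (MVT_gen W (tau i) t (fun _ => 0)) => [r hr|r hr|c [_ e]]; last first.
- move: e; rewrite Rmult_0_l /W /pc !clamp_id; try lra.
  rewrite /Ipf RInt_point /zero /=; lra.
- exact: hW.
rewrite Rmin_left in hr; last lra. rewrite Rmax_right in hr; last lra.
have hr' : tau i < r < tau i.+1 by lra.
have := is_derive_minus (fun r => x (pc i r) j) (Ipf (plantP j) i) r _ _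
   (clamp_deriv _ _ (fun z => x z j) r _ hr' (hder r hr' j)) (Ipf_deriv (plantP j) i r (cc_plant j)).
rewrite /minus /plus /opp /= -(pf_eq (plantP j) i r); last lra.
rewrite /plantP Rplus_opp_r; exact.
Qed.

Lemma ftc0 j t : 0 <= t -> x t j - x 0 j = Qf (plantP j) t.
Proof.
move=> ht.
suff H : forall i t, tau i <= t <= tau i.+1 -> x t j - x 0 j = Qf (plantP j) t.
  case: (hcover t ht) => i hi; apply: (H i); lra.
elim => [|i IH] t' ht'.
  have e := Q_piece (plantP j) 0 t' (cc_plant j) ht'.
  have e2 := ftc_piece j 0 t' ht'.
  rewrite tau0 Q0 in e e2; lra.
have e := Q_piece (plantP j) i.+1 t' (cc_plant j) ht'.
have e2 := ftc_piece j i.+1 t' ht'.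
have e3 := IH (tau i.+1) ltac:(have := tau_step i; lra).
lra.
Qed.

Lemma ftc j s t : 0 <= s -> 0 <= t -> x t j - x s j = RInt (fun r => plant f g (x r) (u r) theta j) s t.
Proof.
move=> hs ht.
have e := RInt_Chasles (fun r => plantP j (x r) (u r)) 0 s t (ex_int0 _ s (cc_plant j) hs) (ex_int _ s t (cc_plant j) hs ht).
have e1 := ftc0 j s hs; have e2 := ftc0 j t ht.
rewrite /Qf in e1 e2; rewrite /plus /= in e.
rewrite /plantP in e e1 e2; lra.
Qed.

Lemma pq j s t : 0 <= s -> 0 <= t ->
  p_fun f x u t s j = rsum (fun c => theta c * q_fun g x u t s j c).
Proof.
move=> hs ht; rewrite /p_fun ftc //.
rewrite /plant /vadd /mvmul.
have hexf := ex_int _ s t (cc_f j) hs ht.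
have hexg : forall c, ex_RInt (fun r => g (x r) (u r) j c * theta c) s t.
  move=> c; apply: (ex_RInt_ext (fun r => scal (theta c) (g (x r) (u r) j c))).
    move=> r _; rewrite /scal /= /mult /=; ring.
  apply: ex_RInt_scal; exact: (ex_int _ s t (cc_g j c) hs ht).
have := RInt_plus (fun r => f (x r) (u r) j) (fun r => rsum (fun c => g (x r) (u r) j c * theta c)) s t hexf.
rewrite /plus /= => ->; last first.
  apply: (ex_RInt_ext (fun r => rsum (fun c => g (x r) (u r) j c * theta c))) => //.
  eexists; apply: is_RInt_rsum => c; exact: RInt_correct.
rewrite RInt_rsum // (_ : forall a b : R, a + b - a = b); last by move=> *; ring.
apply: rsum_ext => c; rewrite /q_fun.
rewrite (RInt_ext _ (fun r => scal (theta c) (g (x r) (u r) j c))); last by move=> r _; rewrite /scal /= /mult /=; ring.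
rewrite RInt_scal //; exact: (ex_int _ s t (cc_g j c) hs ht).
Qed.

Section Window.
Variables (al be : R).
Hypothesis hal : 0 <= al.
Hypothesis hab : al < be.

Definition Qt j c := fun t => Qf (gP j c) (clamp al be t).
Lemma Qt_cont j c t : continuous (Qt j c) t.
Proof.
apply: (rcont_clamp al be (Qf (gP j c))); first lra.
apply: rcont_sub (Q_rcont _ (cc_g j c)) => s hs; lra.
Qed.

Lemma q_eq j c t s : al <= t <= be -> al <= s <= be -> q_fun g x u t s j c = Qt j c t - Qt j c s.
Proof.
move=> ht hs; rewrite /q_fun /Qt !clamp_id // /Qf.
have e := RInt_Chasles (fun r => gP j c (x r) (u r)) 0 s t (ex_int0 _ s (cc_g j c) ltac:(lra)) (ex_int _ s t (cc_g j c) ltac:(lra) ltac:(lra)).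
rewrite /plus /= /gP in e *; lra.
Qed.

Lemma open_in r : Rmin al be < r < Rmax al be -> al <= r <= be.
Proof. rewrite Rmin_left ?Rmax_right; lra. Qed.

Lemma G_eq c1 c2 : Gmat g x u al be c1 c2 = rsum (fun j => Bv (Qt j c1) (Qt j c2) al be).
Proof.
rewrite /Gmat -dbl_sum; try by move=> *; exact: Qt_cont.
apply: RInt_ext => t /open_in ht; apply: RInt_ext => s /open_in hs.
apply: rsum_ext => j; rewrite !q_eq //.
Qed.

Definition Pt j := fun t => rsum (fun c2 => theta c2 * Qt j c2 t).
Lemma Pt_cont j t : continuous (Pt j) t.
Proof.
apply: cont_of_rcontT; apply: rcont_rsum => c; apply: rcont_mult; first exact: rcont_const.
apply: rcont_of_cont; exact: Qt_cont.
Qed.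

Lemma Z_eq c : Zvec f g x u al be c = rsum (fun j => Bv (Qt j c) (Pt j) al be).
Proof.
rewrite /Zvec -dbl_sum; [| by move=> *; exact: Qt_cont| by move=> *; exact: Pt_cont].
apply: RInt_ext => t /open_in ht; apply: RInt_ext => s /open_in hs.
apply: rsum_ext => j; rewrite q_eq // pq; try lra.
congr Rmult; rewrite /Pt -rsum_minus; apply: rsum_ext => c2; rewrite q_eq //; ring.
Qed.

Lemma Gth_Z : mvmul (Gmat g x u al be) theta = Zvec f g x u al be.
Proof.
apply: functional_extensionality => c; rewrite Z_eq /mvmul.
rewrite (rsum_ext (fun j => Bv (Qt j c) (Pt j) al be) (fun j => rsum (fun c2 => theta c2 * Bv (Qt j c) (Qt j c2) al be))); last first.
  move=> j; rewrite /Pt Bv_lin_r //; move=> *; exact: Qt_cont.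
rewrite rsum_swap; apply: rsum_ext => c2; rewrite G_eq Rmult_comm -rsum_scal; apply: rsum_ext => j; ring.
Qed.

Lemma rsum_nonneg_zero {p} (F : 'I_p -> R) : (forall i, 0 <= F i) -> rsum F = 0 -> forall i, F i = 0.
Proof. move=> H h i; have := rsum_term_le F i H; have := H i; lra. Qed.

Lemma Gv0 (v : vec l) : mvmul (Gmat g x u al be) v = vzero ->
  forall j t, al <= t <= be -> rsum (fun c => v c * Qt j c t) = rsum (fun c => v c * Qt j c al).
Proof.
move=> hG.
pose A j := fun t => rsum (fun c => v c * Qt j c t).
have hAc : forall j t, continuous (A j) t.
  move=> j t; apply: cont_of_rcontT; apply: rcont_rsum => c; apply: rcont_mult; first exact: rcont_const.
  apply: rcont_of_cont; exact: Qt_cont.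
have e0 : rsum (fun c1 => v c1 * mvmul (Gmat g x u al be) v c1) = 0.
  rewrite hG /vzero (rsum_ext _ (fun _ => 0)); [exact: rsum0| move=> c; ring].
have eB : forall j, Bv (A j) (A j) al be = rsum (fun c1 => rsum (fun c2 => v c1 * v c2 * Bv (Qt j c1) (Qt j c2) al be)).
  move=> j; rewrite {1}/A Bv_lin_r; try (by move=> ?; exact: Qt_cont); try (by move=> ? ?; exact: Qt_cont); try exact: hAc.
  apply: rsum_ext => c1; rewrite Bv_sym /A Bv_lin_r; try (by move=> ?; exact: Qt_cont); try (by move=> ? ?; exact: Qt_cont).
  rewrite -rsum_scal; apply: rsum_ext => c2; rewrite Bv_sym; ring.
have e1 : rsum (fun j => Bv (A j) (A j) al be) = 0.
  rewrite -e0 (rsum_ext _ _ eB) rsum_swap; apply: rsum_ext => c1.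
  rewrite rsum_swap /mvmul -rsum_scal; apply: rsum_ext => c2.
  rewrite G_eq rsum_scal; ring.
have hnn : forall j, 0 <= Bv (A j) (A j) al be by move=> j; exact: (proj1 (Bv_self _ _ _ hab (hAc j))).
move=> j t ht.
have := (proj2 (Bv_self _ _ _ hab (hAc j))) (rsum_nonneg_zero _ hnn e1 j) t ht.
by rewrite /A.
Qed.
End Window.

Lemma cont_zero_closure (psi : R -> R) a0 b0 t0 : a0 < b0 -> a0 <= t0 <= b0 -> continuous psi t0 ->
  (forall r, a0 < r < b0 -> psi r = 0) -> psi t0 = 0.
Proof.
move=> hab0 ht hc hz; apply: NNPP => hne.
have hpos : 0 < Rabs (psi t0) by apply: Rabs_pos_lt.
case: (cont_pt_elim _ _ hc _ hpos) => d [hd Hd].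
set r := if Rle_dec (t0 + Rmin (d / 2) ((b0 - a0) / 2)) b0 then t0 + Rmin (d / 2) ((b0 - a0) / 2) / 2 else t0 - Rmin (d / 2) ((b0 - a0) / 2) / 2.
have hm1 := Rmin_l (d / 2) ((b0 - a0) / 2). have hm2 := Rmin_r (d / 2) ((b0 - a0) / 2).
have hm0 : 0 < Rmin (d / 2) ((b0 - a0) / 2) by apply: Rmin_glb_lt; lra.
have hr : a0 < r < b0 /\ Rabs (r - t0) < d.
  rewrite /r; case: Rle_dec => h /=; (split; [|split_Rabs]); lra.
case: hr => hr1 hr2; have := Hd r hr2; rewrite hz //; rewrite Rminus_0_l Rabs_Ropp; lra.
Qed.

Lemma Gv0_pieces (be : R) (v : vec l) : 0 < be -> mvmul (Gmat g x u 0 be) v = vzero ->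
  forall i, tau i.+1 <= be -> forall r, tau i <= r <= tau i.+1 ->
  mvmul (g (x r) (k (thh i) (x r))) v = vzero.
Proof.
move=> hbe hG i hi r hr; apply: functional_extensionality => j; rewrite /vzero /mvmul.
have hA := Gv0 0 be (Rle_refl 0) hbe v hG j.
have hQt0 : forall c, Qt 0 be j c 0 = 0 by move=> c; rewrite /Qt clamp_id ?Q0 //; lra.
have hti := tau_strict i. have ht0 := tau_ge0 i.
have hJ : forall t, tau i <= t <= tau i.+1 -> rsum (fun c => v c * Ipf (gP j c) i t) = 0.
  move=> t ht.
  have hA0 : forall t, 0 <= t <= be -> rsum (fun c => v c * Qt 0 be j c t) = 0.
    move=> t' ht'; rewrite hA // (rsum_ext _ (fun c => 0)); first exact: rsum0.
    by move=> c; rewrite hQt0 Rmult_0_r.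
  have e1 := hA0 t ltac:(lra). have e2 := hA0 (tau i) ltac:(lra).
  rewrite (rsum_ext _ (fun c => v c * Qt 0 be j c t - v c * Qt 0 be j c (tau i))).
    by rewrite rsum_minus e1 e2; ring.
  move=> c; rewrite /Qt !clamp_id; try lra.
  rewrite (Q_piece (gP j c) i t) //; [ring| exact: cc_g].
set psi := fun t => rsum (fun c => v c * pf (gP j c) i t).
have hpsic : forall t, continuous psi t.
  move=> t; apply: cont_of_rcontT; apply: rcont_rsum => c; apply: rcont_mult; first exact: rcont_const.
  apply: rcont_of_cont => s; apply: pf_cont; exact: cc_g.
have hder : forall t, is_derive (fun t => rsum (fun c => v c * Ipf (gP j c) i t)) t (psi t).
  move=> t; apply: is_derive_rsum => c; apply: is_derive_scal; apply: Ipf_deriv; exact: cc_g.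
have hpsi0 : forall t, tau i < t < tau i.+1 -> psi t = 0.
  move=> t ht.
  have h0 : is_derive (fun t => rsum (fun c => v c * Ipf (gP j c) i t)) t 0.
    apply: (is_derive_ext_loc (fun _ => 0)); last exact: (is_derive_const 0 t).
    exists (mkposreal _ (Rmin_pos _ _ (Rlt_Rminus _ _ (proj1 ht)) (Rlt_Rminus _ _ (proj2 ht)))).
    move=> s /= hs; symmetry; apply: hJ.
    move: hs; rewrite /ball /= /AbsRing_ball /abs /minus /plus /opp /= => hs.
    have h1 := Rmin_l (t - tau i) (tau i.+1 - t); have h2 := Rmin_r (t - tau i) (tau i.+1 - t).
    split_Rabs; lra.
  rewrite -(is_derive_unique _ _ _ (hder t)); exact: is_derive_unique.
have := cont_zero_closure psi (tau i) (tau i.+1) r hti hr (hpsic r) hpsi0.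
rewrite /psi => <-; apply: rsum_ext => c; rewrite /pf /gP /pc clamp_id //; ring.
Qed.

Hypothesis hNtil1 : (1 <= Ntil)%nat.
Definition Rleb (a b : R) : bool := if Rle_dec a b then true else false.

Lemma mu_exists i : exists mu, is_min (mu_set tau T Ntil i) mu /\ 0 <= mu < tau i.+1 /\
  ((i.+1 <= Ntil)%nat -> mu = 0).
Proof.
have hN1 : 1 <= INR Ntil by apply: (le_INR 1); apply/leP.
pose P := fun j => (j <= i)%nat && Rleb (tau i.+1 - INR Ntil * T) (tau j).
have hPi : exists j, P j.
  exists i; rewrite /P leqnn /Rleb; case: Rle_dec => // h; exfalso; apply: h.
  have := tau_step i; nra.
case: (ex_minnP hPi) => j /andP [hj1 hj2] hmin.
exists (tau j); split; [split|split].
- exists j; split; [exact: hj1| split => //]; move: hj2; rewrite /Rleb; by case: Rle_dec.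
- move=> z [j' [hj' [-> hz]]]; apply: tau_mono; apply: hmin; rewrite /P hj' /Rleb; by case: Rle_dec.
- split; first exact: tau_ge0.
  have := tau_mono j i hj1; have := tau_strict i; lra.
- move=> hiN; have : (j <= 0)%nat.
    apply: hmin; rewrite /P leq0n /Rleb tau0; case: Rle_dec => // h; exfalso; apply: h.
    have := tau_le i.+1; have : INR i.+1 <= INR Ntil by apply: le_INR; apply/leP.
    nra.
  by rewrite leqn0 => /eqP ->; rewrite tau0.
Qed.

Lemma mvmul_sub {p q} (G : mat p q) a1 b1 : mvmul G (vsub a1 b1) = vsub (mvmul G a1) (mvmul G b1).
Proof. apply: functional_extensionality => c; rewrite /mvmul /vsub -rsum_minus; apply: rsum_ext => j; ring. Qed.

Lemma update i : exists mu, 0 <= mu < tau i.+1 /\ ((i.+1 <= Ntil)%nat -> mu = 0) /\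
  vnorm (vsub (thh i.+1) (thh i)) <= vnorm (vsub theta (thh i)) /\
  mvmul (Gmat g x u mu (tau i.+1)) (vsub (thh i.+1) theta) = vzero.
Proof.
case: (mu_exists i) => mu [hmin [hmu hmu0]].
have [_ [_ [_ [_ [_ hest]]]]] := hI i.
case: (hest mu hmin) => h1 h2.
have hGZ := Gth_Z mu (tau i.+1) (proj1 hmu) (proj2 hmu).
exists mu; split => //; split => //; split; first by apply: h2.
rewrite mvmul_sub h1 hGZ; apply: functional_extensionality => c; rewrite /vsub /vzero; ring.
Qed.

Lemma zero_piece i : x (tau i) = vzero -> forall t, tau i <= t <= tau i.+1 -> x t = vzero.
Proof.
move=> hx.
case: (field_lin0 f g k (thh i) theta hf hg hk hf0 hg0 hk0) => d [hd [L [hL HL]]].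
apply: (zero_unique x (fun z => plant f g z (k (thh i) z) theta) (tau i) (tau i.+1) d L) => //.
- by have := tau_step i; lra.
- exact: hxc_piece.
- move=> t ht; have [hu [_ [hder _]]] := hI i.
  rewrite -(proj1 (hu t ltac:(lra))); exact: hder.
Qed.

Lemma zero_prop i : x (tau i) = vzero -> forall t, tau i <= t -> x t = vzero.
Proof.
move=> hx t ht.
have hz : forall d, x (tau (i + d)) = vzero.
  elim => [|d IH]; first by rewrite addn0.
  rewrite addnS; apply: (zero_piece (i + d)) => //; have := tau_step (i + d); lra.
case: (piece_ge i t ht) => j [hij hj].
apply: (zero_piece j); last lra.
by rewrite -(subnKC hij).
Qed.

Lemma piece_bound i K1 K2 C : 0 < K1 -> 0 <= C ->
  (forall z, K1 * vnorm z ^ 2 <= V (thh i) z) -> (forall z, Q (thh i) z <= K2 * vnorm z ^ 2) ->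
  (forall z, a z <= C * vnorm z ^ 2) ->
  forall t, tau i <= t <= tau i.+1 -> vnorm (x t) ^ 2 <= (K2 + C) / K1 * vnorm (x (tau i)) ^ 2.
Proof.
move=> hK1 hC hV hQ ha t ht.
case: (classic (x (tau i) = vzero)) => hx.
  rewrite (zero_piece i hx t ht) hx vnorm_vzero; have := pow2_ge_0 0; rewrite /= Rmult_0_l Rmult_0_r; lra.
have e := trigger i hx t ht.
have e1 := hV (x t). have e2 := hQ (x (tau i)). have e3 := ha (x (tau i)).
have : K1 * vnorm (x t) ^ 2 <= (K2 + C) * vnorm (x (tau i)) ^ 2 by lra.
move=> h; apply: (Rmult_le_reg_l K1) => //.
rewrite (_ : K1 * ((K2 + C) / K1 * vnorm (x (tau i)) ^ 2) = (K2 + C) * vnorm (x (tau i)) ^ 2) //.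
field; lra.
Qed.

Lemma vsub_eq0 {p} (a1 b1 : vec p) : vsub a1 b1 = vzero -> a1 = b1.
Proof.
move=> h; apply: functional_extensionality => c.
have := f_equal (fun v => v c) h; rewrite /vsub /vzero /=; lra.
Qed.

Lemma thh_stay j : thh j = theta -> forall i, (j <= i)%nat -> thh i = theta.
Proof.
move=> hj i hij; rewrite -(subnKC hij); elim: (i - j)%nat => [|d IH]; first by rewrite addn0.
rewrite addnS; case: (update (j + d)) => mu [_ [_ [h1 _]]].
rewrite IH vsub_self vnorm_vzero in h1.
apply: vsub_eq0; apply: vnorm_eq0; have := vnorm_ge0 (vsub (thh (j + d).+1) theta); lra.
Qed.

Lemma thh_growth i : vnorm (vsub (thh i.+1) theta) <= 2 * INR l * vnorm (vsub (thh i) theta).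
Proof.
case: (update i) => mu [_ [_ [h1 _]]].
rewrite [X in _ <= X]vnorm_vsub_sym in h1.
apply: Rle_trans (vnorm_le_l1 _) _.
rewrite (_ : 2 * INR l * vnorm (vsub (thh i) theta) = INR l * (2 * vnorm (vsub (thh i) theta))); last ring.
apply: rsum_le_const => c.
have e1 : Rabs (thh i.+1 c - thh i c) <= vnorm (vsub (thh i.+1) (thh i)) := coord_le_vnorm _ c.
have e2 : Rabs (thh i c - theta c) <= vnorm (vsub (thh i) theta) := coord_le_vnorm _ c.
change (Rabs (thh i.+1 c - theta c) <= 2 * vnorm (vsub (thh i) theta)).
have : Rabs (thh i.+1 c - theta c) <= Rabs (thh i.+1 c - thh i c) + Rabs (thh i c - theta c).
  have -> : thh i.+1 c - theta c = (thh i.+1 c - thh i c) + (thh i c - theta c) by ring.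
  exact: Rabs_triang.
lra.
Qed.

Lemma is_sol_shift j : (forall i, (j <= i)%nat -> thh i = theta) ->
  is_sol (cl_field f g k theta) (fun s => x (tau j + s)).
Proof.
move=> hth.
have hj0 := tau_ge0 j.
have Hder : forall t, tau j < t -> vderiv x t (cl_field f g k theta (x t)).
  move=> t ht c; case: (piece_ge j t (Rlt_le _ _ ht)) => i [hij hi].
  case: (Rlt_or_le (tau i) t) => hti.
  - have [hu [_ [hder _]]] := hI i.
    have := hder t ltac:(lra) c; rewrite (proj1 (hu t ltac:(lra))) (hth i hij); exact.
  - have eti : t = tau i by lra.
    case: i hij hi hti eti => [|i] hij hi hti eti.
      by rewrite leqn0 in hij; move/eqP: hij => hij; rewrite hij in ht; lra.
    have hij' : (j <= i)%nat.
      case: (leqP j i) => // hlt.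
      have : j = i.+1 by apply/eqP; rewrite eqn_leq hij hlt.
      move=> e; rewrite e in ht; lra.
    rewrite eti.
    apply: (glue_deriv (fun r => x r c) (fun r => plant f g (x r) (k theta (x r)) theta c) (tau i.+1) (tau i)).
    + exact: tau_strict.
    + apply: cont_on_coord; exact: hxc_piece.
    + move=> r hr; have [hu [_ [hder _]]] := hI i.
      have := hder r hr c; rewrite (proj1 (hu r ltac:(lra))) (hth i hij'); exact.
    + apply: ccont_plant => //; [exact: hxc_piece| apply: cont_on_k => //; exact: hxc_piece].
    + by [].
    + have [_ [hrd _]] := hI i.+1; rewrite /thh in hrd; have := hrd c.
      by rewrite -/(thh i.+1) (hth i.+1 hij).
split.
  move=> t ht eps he; case: (hxc (tau j + t) ltac:(lra) eps he) => d [hd Hd].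
  exists d; split => // s hs hst; apply: Hd; first lra.
  by rewrite (_ : tau j + s - (tau j + t) = s - t); last ring.
split.
  move=> c; have [_ [hrd _]] := hI j; have := hrd c.
  rewrite (hth j (leqnn j)) => H.
  rewrite Rplus_0_r; apply: filterlim_ext H => h; by rewrite Rplus_0_l.
move=> s hs c.
have := is_derive_comp (fun r => x r c) (fun s => tau j + s) s _ 1 (Hder (tau j + s) ltac:(lra) c).
rewrite scal_one; apply.
have := is_derive_plus (fun _ => tau j) (fun s => s) s zero one (is_derive_const _ s) (is_derive_id s).
by rewrite /plus /zero /one /= Rplus_0_l.
Qed.

Lemma vadd_vsub {p} (a1 b1 : vec p) : vadd b1 (vsub a1 b1) = a1.
Proof. apply: functional_extensionality => c; rewrite /vadd /vsub; ring. Qed.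

Lemma caseB N : (N < Ntil)%nat -> H3_prop f g k N -> (forall i, (i <= N)%nat -> thh i <> theta) ->
  x 0 = vzero.
Proof.
move=> hN H3 hne.
have := H3 tau theta (fun i => vsub (thh i) theta) x tau0 (fun i _ => tau_strict i).
rewrite /= => H; apply: (H _ _ _ _ 0); last by split; [lra| exact: tau_ge0].
- move=> i hi e; apply: (hne i hi); exact: vsub_eq0.
- apply: cont_on_sub hxc => t ht; lra.
- move=> i hi; rewrite vadd_vsub; have [hu [hrd [hder _]]] := hI i; split => //.
  move=> t ht; rewrite -(proj1 (hu t ltac:(lra))); exact: hder.
- move=> i j hi hji t ht; rewrite vadd_vsub.
  case: (update i) => mu [hmu [hmu0 [_ hG]]].
  rewrite hmu0 in hG; last exact: ltnW (leq_ltn_trans hi hN).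
  apply: (Gv0_pieces (tau i.+1) _ _ hG j) => //.
  + have := tau_strict i; have := tau_ge0 i; lra.
  + exact: tau_mono.
Qed.

Lemma exp_le_exp a1 b1 : a1 <= b1 -> exp a1 <= exp b1.
Proof. case=> h; [left; exact: exp_increasing| rewrite h; lra]. Qed.

Lemma sq_to_lin a1 b1 R0 : 0 <= a1 -> 0 <= b1 -> 0 <= R0 -> a1 ^ 2 <= R0 * b1 ^ 2 -> a1 <= (R0 + 1) * b1.
Proof. move=> h1 h2 h3 h4; apply: Rnot_lt_le => h; have : (R0 + 1) * b1 >= 0 by nra. nra. Qed.

Lemma sol_bound N : (N < Ntil)%nat -> H3_prop f g k N ->
  forall Mg omg, 0 < Mg -> 0 < omg ->
  (forall y, is_sol (cl_field f g k theta) y -> forall t, 0 <= t ->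
       vnorm (y t) <= Mg * exp (- omg * t) * vnorm (y 0)) ->
  forall K1 K2 C, 0 < K1 -> K1 <= K2 -> 0 <= C ->
  (forall i, (i <= N)%nat -> forall z, K1 * vnorm z ^ 2 <= V (thh i) z) ->
  (forall i, (i <= N)%nat -> forall z, Q (thh i) z <= K2 * vnorm z ^ 2) ->
  (forall z, a z <= C * vnorm z ^ 2) ->
  forall t, 0 <= t -> vnorm (x t) <=
    (Mg + 1) * exp (omg * (INR N * T)) * ((K2 + C) / K1 + 1) ^ N * exp (- omg * t) * vnorm (x 0).
Proof.
move=> hN H3 Mg omg hMg homg hGES K1 K2 C hK1 hK12 hC hVK hQK ha.
set R0 := (K2 + C) / K1.
have hR0 : 1 <= R0.
  rewrite /R0; apply: (Rmult_le_reg_r K1) => //.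
  rewrite /Rdiv Rmult_assoc Rinv_l; lra.
have hx0 := vnorm_ge0 (x 0).
have Hpc : forall i, (i < N)%nat -> forall t, tau i <= t <= tau i.+1 -> vnorm (x t) <= (R0 + 1) * vnorm (x (tau i)).
  move=> i hi t ht; apply: sq_to_lin; try exact: vnorm_ge0; try lra.
  apply: (piece_bound i K1 K2 C) => //; [apply: hVK | apply: hQK]; exact: ltnW.
have Hpre : forall i, (i <= N)%nat -> forall t, 0 <= t <= tau i -> vnorm (x t) <= (R0 + 1) ^ i * vnorm (x 0).
  elim => [|i IH] hi t ht.
    rewrite tau0 in ht; have -> : t = 0 by lra. rewrite /=; lra.
  have hpow : 1 <= (R0 + 1) ^ i by apply: pow_R1_Rle; lra.
  case: (Rle_or_lt t (tau i)) => hti.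
  - apply: Rle_trans (IH (ltnW hi) t ltac:(lra)) _; rewrite /=.
    apply: Rmult_le_compat_r => //; nra.
  - apply: Rle_trans (Hpc i hi t ltac:(lra)) _; rewrite /= Rmult_assoc.
    apply: Rmult_le_compat_l; first lra.
    apply: IH; [exact: ltnW| have := tau_ge0 i; lra].
have hRN : 1 <= (R0 + 1) ^ N by apply: pow_R1_Rle; lra.
move=> t ht.
have hNT := tau_le N.
set E := exp (omg * (INR N * T)) * exp (- omg * t).
case: (classic (exists j, (j <= N)%nat /\ thh j = theta)) => [[j [hjN hj]]|hB].
- have hst := thh_stay j hj.
  have hsol := is_sol_shift j hst.
  have hjT : tau j <= INR N * T.
    have := tau_le j; have : INR j <= INR N by apply: le_INR; apply/leP.
    nra.
  have hxj : vnorm (x (tau j)) <= (R0 + 1) ^ N * vnorm (x 0).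
    apply: Rle_trans (Hpre j hjN (tau j) ltac:(have := tau_ge0 j; lra)) _.
    apply: Rmult_le_compat_r => //; apply: Rle_pow; [lra| exact/leP].
  case: (Rle_or_lt t (tau j)) => htj.
  + apply: Rle_trans (Hpre j hjN t ltac:(lra)) _.
    have h1 : (R0 + 1) ^ j <= (R0 + 1) ^ N by apply: Rle_pow; [lra| exact/leP].
    have h2 : 1 <= exp (omg * (INR N * T)) * exp (- omg * t).
      rewrite -exp_plus; rewrite -exp_0; apply: exp_le_exp; nra.
    have h3 := exp_pos (- omg * t). have h4 := exp_pos (omg * (INR N * T)).
    have : (R0 + 1) ^ j * vnorm (x 0) <= (R0 + 1) ^ N * vnorm (x 0) by apply: Rmult_le_compat_r.
    have : (R0 + 1) ^ N * vnorm (x 0) <= (Mg + 1) * (exp (omg * (INR N * T)) * exp (- omg * t)) * ((R0 + 1) ^ N * vnorm (x 0)).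
      have : 0 <= (R0 + 1) ^ N * vnorm (x 0) by nra.
      have : 1 <= (Mg + 1) * (exp (omg * (INR N * T)) * exp (- omg * t)) by nra.
      nra.
    move=> *; apply: (Rle_trans _ ((Mg + 1) * (exp (omg * (INR N * T)) * exp (- omg * t)) * ((R0 + 1) ^ N * vnorm (x 0)))); first lra.
    right; ring.
  + have := hGES _ hsol (t - tau j) ltac:(lra).
    rewrite (_ : tau j + (t - tau j) = t); last ring.
    rewrite Rplus_0_r => h.
    apply: Rle_trans h _.
    have e1 : exp (- omg * (t - tau j)) <= exp (omg * (INR N * T)) * exp (- omg * t).
      rewrite -exp_plus; apply: exp_le_exp; nra.
    have h3 := exp_pos (- omg * (t - tau j)).
    have hxjn := vnorm_ge0 (x (tau j)).
    apply: (Rle_trans _ (Mg * (exp (omg * (INR N * T)) * exp (- omg * t)) * ((R0 + 1) ^ N * vnorm (x 0)))).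
    * apply: Rmult_le_compat; try nra.
    * have : 0 <= (exp (omg * (INR N * T)) * exp (- omg * t)) * ((R0 + 1) ^ N * vnorm (x 0)).
        have := exp_pos (omg * (INR N * T)); have := exp_pos (- omg * t); nra.
      move=> hh; apply: (Rle_trans _ ((Mg + 1) * (exp (omg * (INR N * T)) * exp (- omg * t)) * ((R0 + 1) ^ N * vnorm (x 0)))); first nra.
      right; ring.
- have hx00 : x 0 = vzero.
    apply: (caseB N hN H3) => i hi e; apply: hB; by exists i.
  have := zero_prop 0 ltac:(by rewrite tau0) t ltac:(rewrite tau0; lra).
  move=> ->; rewrite hx00 vnorm_vzero Rmult_0_r; lra.
Qed.
End Hyb.


Theorem theorem3p3 (n m l : nat) (hn : (0 < n)%nat) (hm : (0 < m)%nat) (hl : (0 < l)%nat)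
  (f : vec n -> vec m -> vec n) (g : vec n -> vec m -> mat n l)
  (k : vec l -> vec n -> vec m) (V Q : vec l -> vec n -> R)
  (hf : forall j, smooth2 (fun x u => f x u j))
  (hg : forall j c, smooth2 (fun x u => g x u j c))
  (hk : forall j, smooth2 (fun th x => k th x j))
  (hf0 : f vzero vzero = vzero) (hg0 : g vzero vzero = mzero)
  (hk0 : forall th, k th vzero = vzero)
  (hVnn : forall th x, 0 <= V th x) (hQnn : forall th x, 0 <= Q th x)
  (hVc : vcont2 V) (hQc : vcont2 Q)
  (hVpd : forall th, posdef (V th)) (hQpd : forall th, posdef (Q th))
  (hVru : forall th, rad_unbounded (V th)) (hQru : forall th, rad_unbounded (Q th))
  (H1 : forall th, GAS (cl_field f g k th) /\
     forall x, is_sol (cl_field f g k th) x -> forall t, 0 <= t -> V th (x t) <= Q th (x 0))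
  (H2 : forall Th : vec l -> Prop, (exists th, Th th) -> compact_set Th ->
     forall M, 0 <= M -> exists Rr, 0 < Rr /\
       forall th x, Th th -> V th x <= M -> vnorm x <= Rr)
  (N : nat) (hN : (1 <= N)%nat) (H3 : H3_prop f g k N)
  (Mg omg : vec l -> R)
  (hGES : forall th, 0 < Mg th /\ 0 < omg th /\
     forall x, is_sol (cl_field f g k th) x -> forall t, 0 <= t ->
       vnorm (x t) <= Mg th * exp (- omg th * t) * vnorm (x 0))
  (hK : forall Th : vec l -> Prop, (exists th, Th th) -> compact_set Th ->
     exists K1 K2, 0 < K1 < K2 /\ forall x th, Th th ->
       K1 * vnorm x ^ 2 <= V th x /\ V th x <= Q th x /\ Q th x <= K2 * vnorm x ^ 2)
  (T : R) (hT : 0 < T)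
  (a : vec n -> R) (hac : vcont1 a) (hann : forall x, 0 <= a x) (hapd : posdef a)
  (hasup : exists C, forall x, x <> vzero -> a x / vnorm x ^ 2 <= C)
  (Ntil : nat) (hNtil : (N < Ntil)%nat) :
  exists Mt : vec l -> vec l -> R, (forall th th0, 0 < Mt th th0) /\
  forall (theta : vec l) (x0 : vec n) (th0 : vec l)
         (x : R -> vec n) (u : R -> vec m) (th : R -> vec l) (tau : nat -> R),
    hybrid_sol f g k V Q a T Ntil theta x u th tau -> x 0 = x0 -> th 0 = th0 ->
    forall t, 0 <= t -> vnorm (x t) <= Mt theta th0 * exp (- omg theta * t) * vnorm x0.
Proof.
have hNtil1 : (1 <= Ntil)%nat by apply: leq_trans hNtil; exact: ltnW.
have hVQ : forall th z, V th z <= Q th z.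
  move=> th z.
  have hb : box th 0 th by move=> c; lra.
  case: (hK (box th 0) (ex_intro _ th hb) (box_compact th 0 (Rle_refl 0))) => K1 [K2 [_ H]].
  by case: (H z th hb) => _ [].
case: hasup => C0 hC0.
set C := Rmax C0 0.
have hC : 0 <= C by exact: Rmax_r.
have haC : forall z, a z <= C * vnorm z ^ 2.
  move=> z; case: (classic (z = vzero)) => hz.
    rewrite hz (proj1 hapd) vnorm_vzero; have := pow2_ge_0 0; nra.
  have hp := vnorm_pos z hz.
  have hp2 : 0 < vnorm z ^ 2 by apply: pow_lt.
  have e : a z = a z / vnorm z ^ 2 * vnorm z ^ 2 by field; lra.
  rewrite e; apply: Rmult_le_compat_r; first lra.
  apply: Rle_trans (hC0 z hz) (Rmax_l _ _).
have hl1 : 1 <= 2 * INR l.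
  have : 1 <= INR l by apply: (le_INR 1); apply/leP.
  lra.
have HM : forall theta th0, exists M, 0 < M /\
  forall (x0 : vec n) (x : R -> vec n) (u : R -> vec m) (th : R -> vec l) (tau : nat -> R),
    hybrid_sol f g k V Q a T Ntil theta x u th tau -> x 0 = x0 -> th 0 = th0 ->
    forall t, 0 <= t -> vnorm (x t) <= M * exp (- omg theta * t) * vnorm x0.
  move=> theta th0.
  set r := (2 * INR l) ^ N * vnorm (vsub th0 theta).
  have hr : 0 <= r by apply: Rmult_le_pos; [apply: pow_le; lra| exact: vnorm_ge0].
  set B := box (fun c => theta c - r) (2 * r).
  have hBth : B theta by move=> c; lra.
  have hBc : compact_set B by apply: box_compact; lra.
  case: (hK B (ex_intro _ theta hBth) hBc) => K1 [K2 [hK12 HK]].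
  have [hMg [homg hges]] := hGES theta.
  set R0 := (K2 + C) / K1 + 1.
  have hR0 : 0 < R0.
    rewrite /R0; have : 0 <= (K2 + C) / K1 by apply: Rle_mult_inv_pos; lra.
    lra.
  exists ((Mg theta + 1) * exp (omg theta * (INR N * T)) * R0 ^ N); split.
    apply: Rmult_lt_0_compat; last exact: pow_lt.
    apply: Rmult_lt_0_compat; [lra| exact: exp_pos].
  move=> x0 x u th tau hyb hx0 hth0 t ht.
  rewrite -hx0.
  have htau0 : tau 0%nat = 0 by case: hyb.
  have hgrow : forall i, vnorm (vsub (thh l th tau i) theta) <= (2 * INR l) ^ i * vnorm (vsub th0 theta).
    elim => [|i IH].
      by rewrite /thh htau0 hth0 /=; lra.
    apply: Rle_trans (thh_growth n m l f g k V Q hf hg hk hVc hVQ T Ntil a hT hapd theta x u th tau hyb hNtil1 i) _.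
    rewrite /=; have := vnorm_ge0 (vsub (thh l th tau i) theta); nra.
  have hinB : forall i, (i <= N)%nat -> B (thh l th tau i).
    move=> i hi c.
    have e1 : Rabs (thh l th tau i c - theta c) <= vnorm (vsub (thh l th tau i) theta) := coord_le_vnorm _ c.
    have e2 : (2 * INR l) ^ i <= (2 * INR l) ^ N by apply: Rle_pow => //; exact/leP.
    have e3 := hgrow i.
    have : (2 * INR l) ^ i * vnorm (vsub th0 theta) <= r.
      rewrite /r; apply: Rmult_le_compat_r => //; exact: vnorm_ge0.
    move=> e4; move: e1; split_Rabs; lra.
  apply: (sol_bound n m l f g k V Q hf hg hk hf0 hg0 hk0 hVc hVQ T Ntil a hT hapd theta x u th tau hyb hNtil1 N hNtil H3
           (Mg theta) (omg theta) hMg homg hges K1 K2 C) => //.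
  - lra.
  - lra.
  - move=> i hi z; exact: (proj1 (HK z _ (hinB i hi))).
  - move=> i hi z; exact: (proj2 (proj2 (HK z _ (hinB i hi)))).
pose Mt := fun theta th0 => proj1_sig (constructive_indefinite_description _ (HM theta th0)).
have HMt : forall theta th0, 0 < Mt theta th0 /\ _ := fun theta th0 => proj2_sig (constructive_indefinite_description _ (HM theta th0)).
exists Mt; split; first by move=> theta th0; case: (HMt theta th0).
move=> theta x0 th0 x u th tau hyb hx0 hth0 t ht.
case: (HMt theta th0) => _ H; exact: (H x0 x u th tau hyb hx0 hth0 t ht).
Qed.
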